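(* For each $n$ let $p=p_n\in(0,1)$, let $X\sim\mathrm{Bin}(n,p)$ and $R = R_n = 1 + X + \frac{X(X-1)}{2}$. If $p(1-p)^{1/3} \gg n^{-1/9}$, i.e. $n^{1/9}p_n(1-p_n)^{1/3}\to\infty$ as $n\to\infty$, then $$\lim_{n\to\infty}\sup_{w\in\mathbb{R}}\left|\mathbb{P}\left(\frac{R-\mathbb{E}(R)}{\sqrt{\mathbb{V}(R)}}\le w\right) - \Phi(w)\right| = 0,$$ where $\Phi$ is the standard normal distribution function.
   Context: $\mathbb{V}$ denotes variance. $R$ is the number of regions formed when $n$ cuts are attempted on a pizza, each succeeding independently with probability $p$, with every successful cut meeting all prior successful cuts. The notation $a_n\gg b_n$ means $a_n/b_n\to\infty$. *)

(* Defs.v *)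
From Stdlib Require Import Reals.
From Coquelicot Require Import Coquelicot.
Open Scope R_scope.

Definition binom_pmf (n : nat) (p : R) (k : nat) : R :=
  Binomial.C n k * p ^ k * (1 - p) ^ (n - k).

(* Number of regions as a function of the number X = k of successful cuts. *)
Definition regions (k : nat) : R := 1 + INR k + INR k * (INR k - 1) / 2.

Definition ER (n : nat) (p : R) : R :=
  sum_f_R0 (fun k => regions k * binom_pmf n p k) n.

Definition VR (n : nat) (p : R) : R :=
  sum_f_R0 (fun k => (regions k - ER n p) ^ 2 * binom_pmf n p k) n.

Definition prob_std_le (n : nat) (p : R) (w : R) : R :=
  sum_f_R0 (fun k =>
    if Rle_dec ((regions k - ER n p) / sqrt (VR n p)) w
    then binom_pmf n p k else 0) n.

Definition std_normal_density (x : R) : R := exp (- x ^ 2 / 2) / sqrt (2 * PI).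

Definition Phi (w : R) : R :=
  RInt_gen std_normal_density (Rbar_locally m_infty) (at_point w).

(* Main.v *)
Require Import Defs.
From Stdlib Require Import Reals Lra Lia Psatz.
From Coquelicot Require Import Coquelicot.
Open Scope R_scope.

Definition Ex (n : nat) (p : R) (f : nat -> R) : R :=
  sum_f_R0 (fun k => f k * binom_pmf n p k) n.

Lemma C_n_0 n : Binomial.C n 0 = 1.
Proof. unfold Binomial.C. rewrite Nat.sub_0_r. simpl. field. apply INR_fact_neq_0. Qed.

Lemma C_n_n n : Binomial.C n n = 1.
Proof. unfold Binomial.C. rewrite Nat.sub_diag. simpl. field. apply INR_fact_neq_0. Qed.

Lemma C_pos n k : 0 < Binomial.C n k.
Proof. unfold Binomial.C. apply Rdiv_lt_0_compat. apply INR_fact_lt_0.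
  apply Rmult_lt_0_compat; apply INR_fact_lt_0. Qed.

Lemma pmf_pos n p k : 0 < p < 1 -> 0 < binom_pmf n p k.
Proof. intros. unfold binom_pmf. apply Rmult_lt_0_compat. apply Rmult_lt_0_compat.
  apply C_pos. apply pow_lt; lra. apply pow_lt; lra. Qed.

Lemma pmf_S0 n p : binom_pmf (S n) p 0 = (1-p) * binom_pmf n p 0.
Proof. unfold binom_pmf. rewrite !C_n_0, !Nat.sub_0_r. simpl. ring. Qed.

Lemma pmf_SS n p : binom_pmf (S n) p (S n) = p * binom_pmf n p n.
Proof. unfold binom_pmf. rewrite !C_n_n, !Nat.sub_diag. simpl. ring. Qed.

Lemma pmf_Smid n p k : (k < n)%nat ->
  binom_pmf (S n) p (S k) = p * binom_pmf n p k + (1-p) * binom_pmf n p (S k).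
Proof.
  intros H. unfold binom_pmf. rewrite <- pascal by auto.
  replace (S n - S k)%nat with (S (n - S k)) by lia.
  replace (n - k)%nat with (S (n - S k)) by lia. simpl. ring.
Qed.

Lemma scal_sum' (A : nat -> R) N x : sum_f_R0 (fun k => x * A k) N = x * sum_f_R0 A N.
Proof. rewrite scal_sum. apply sum_eq. intros; ring. Qed.

Lemma Ex_rec n p f :
  Ex (S n) p f = p * Ex n p (fun k => f (S k)) + (1-p) * Ex n p f.
Proof.
  unfold Ex.
  set (A1 := fun k => match k with O => 0 | S j => f (S j) * binom_pmf n p j end).
  set (A2 := fun k => if Nat.leb k n then f k * binom_pmf n p k else 0).
  transitivity (sum_f_R0 (fun k => p * A1 k + (1-p) * A2 k) (S n)).
  - apply sum_eq. intros k Hk. unfold A1, A2. destruct k.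
    + simpl Nat.leb. rewrite pmf_S0. ring.
    + destruct (Nat.leb (S k) n) eqn:E.
      * apply Nat.leb_le in E. rewrite pmf_Smid by lia. ring.
      * apply Nat.leb_gt in E. assert (k = n) by lia. subst. rewrite pmf_SS. ring.
  - rewrite plus_sum.
    rewrite (scal_sum' A1), (scal_sum' A2).
    rewrite decomp_sum by lia. rewrite tech5. simpl pred. unfold A1 at 1. 
    replace (A2 (S n)) with 0 by (unfold A2; rewrite (proj2 (Nat.leb_gt (S n) n)) by lia; reflexivity).
    assert (E2 : sum_f_R0 A2 n = sum_f_R0 (fun k => f k * binom_pmf n p k) n).
    { apply sum_eq. intros. unfold A2. rewrite (proj2 (Nat.leb_le i n)) by lia. reflexivity. }
    rewrite E2. unfold A1. ring.
Qed.

Lemma Ex_ext n p f g : (forall k, (k <= n)%nat -> f k = g k) -> Ex n p f = Ex n p g.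
Proof. intros H. unfold Ex. apply sum_eq. intros. rewrite H; auto. Qed.

Lemma Ex_lin n p a0 a1 a2 a3 a4 :
  Ex n p (fun k => a0 + a1 * INR k + a2 * INR k ^ 2 + a3 * INR k ^ 3 + a4 * INR k ^ 4) =
  a0 * Ex n p (fun _ => 1) + a1 * Ex n p INR + a2 * Ex n p (fun k => INR k ^ 2)
  + a3 * Ex n p (fun k => INR k ^ 3) + a4 * Ex n p (fun k => INR k ^ 4).
Proof.
  unfold Ex. rewrite !scal_sum. rewrite <- !plus_sum. apply sum_eq. intros. ring.
Qed.

Definition m1 (N p : R) := N * p.
Definition m2 (N p : R) := N*(N-1)*p^2 + N*p.
Definition m3 (N p : R) := N*(N-1)*(N-2)*p^3 + 3*N*(N-1)*p^2 + N*p.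
Definition m4 (N p : R) := N*(N-1)*(N-2)*(N-3)*p^4 + 6*N*(N-1)*(N-2)*p^3 + 7*N*(N-1)*p^2 + N*p.

Lemma moments n p :
  Ex n p (fun _ => 1) = 1 /\ Ex n p INR = m1 (INR n) p /\
  Ex n p (fun k => INR k ^ 2) = m2 (INR n) p /\
  Ex n p (fun k => INR k ^ 3) = m3 (INR n) p /\
  Ex n p (fun k => INR k ^ 4) = m4 (INR n) p.
Proof.
  induction n as [|n IH].
  - unfold Ex, binom_pmf, m1, m2, m3, m4. simpl. rewrite C_n_0. simpl. repeat split; ring.
  - destruct IH as (H0 & H1 & H2 & H3 & H4).
    assert (L : forall a0 a1 a2 a3 a4, Ex n p (fun k => a0 + a1 * INR k + a2 * INR k ^ 2 + a3 * INR k ^ 3 + a4 * INR k ^ 4)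
        = a0 + a1 * m1 (INR n) p + a2 * m2 (INR n) p + a3 * m3 (INR n) p + a4 * m4 (INR n) p).
    { intros. rewrite Ex_lin, H0, H1, H2, H3, H4. ring. }
    assert (L' : forall a0 a1 a2 a3 a4 (f : nat -> R), (forall k, f k = a0 + a1 * INR k + a2 * INR k ^ 2 + a3 * INR k ^ 3 + a4 * INR k ^ 4) ->
       Ex n p f = a0 + a1 * m1 (INR n) p + a2 * m2 (INR n) p + a3 * m3 (INR n) p + a4 * m4 (INR n) p).
    { intros. rewrite <- L. apply Ex_ext. intros. apply H. }
    rewrite !Ex_rec. rewrite S_INR.
    rewrite (L' 1 0 0 0 0 (fun _ => 1)) by (intros; ring).
    rewrite (L' 0 1 0 0 0 INR) by (intros; ring).
    rewrite (L' 1 1 0 0 0 (fun k => INR (S k))) by (intros; rewrite S_INR; ring).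
    rewrite (L' 0 0 1 0 0 (fun k => INR k ^ 2)) by (intros; ring).
    rewrite (L' 1 2 1 0 0 (fun k => INR (S k) ^ 2)) by (intros; rewrite S_INR; ring).
    rewrite (L' 0 0 0 1 0 (fun k => INR k ^ 3)) by (intros; ring).
    rewrite (L' 1 3 3 1 0 (fun k => INR (S k) ^ 3)) by (intros; rewrite S_INR; ring).
    rewrite (L' 0 0 0 0 1 (fun k => INR k ^ 4)) by (intros; ring).
    rewrite (L' 1 4 6 4 1 (fun k => INR (S k) ^ 4)) by (intros; rewrite S_INR; ring).
    unfold m1, m2, m3, m4. repeat split; ring.
Qed.

Lemma ER_eq n p : ER n p = 1 + INR n * p + (INR n * p) * (INR n * p - 1) / 2 + INR n * p * (1-p) / 2.
Proof.
  destruct (moments n p) as (H0 & H1 & H2 & H3 & H4).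
  unfold ER. change (sum_f_R0 (fun k => regions k * binom_pmf n p k) n) with (Ex n p regions).
  rewrite (Ex_ext n p regions (fun k => 1 + /2 * INR k + /2 * INR k ^ 2 + 0 * INR k ^ 3 + 0 * INR k ^ 4))
    by (intros; unfold regions; field).
  rewrite Ex_lin, H0, H1, H2, H3, H4. unfold m1, m2, m3, m4. field.
Qed.

Lemma VR_eq n p : let mu := INR n * p in let s2 := INR n * p * (1-p) in
  VR n p = s2 * (mu + /2)^2 + s2 * (mu + /2) * (1 - 2*p) + s2^2/2 + s2 * (1 - 6*p*(1-p)) / 4.
Proof.
  intros mu s2.
  destruct (moments n p) as (H0 & H1 & H2 & H3 & H4).
  unfold VR. set (E := ER n p).
  change (sum_f_R0 (fun k => (regions k - E) ^ 2 * binom_pmf n p k) n) with (Ex n p (fun k => (regions k - E)^2)).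
  rewrite (Ex_ext n p _ (fun k => (1-E)^2 + (1-E) * INR k + (1 - E + /4) * INR k ^ 2 + /2 * INR k ^ 3 + /4 * INR k ^ 4))
    by (intros; unfold regions; field).
  rewrite Ex_lin, H0, H1, H2, H3, H4. unfold E. rewrite ER_eq. unfold m1, m2, m3, m4, mu, s2. field.
Qed.


Definition gs (t:R) : R := exp (- t^2/2).
Definition Gs (x:R) : R := RInt gs 0 x.

Lemma gs_ex_derive x : ex_derive gs x.
Proof. unfold gs. auto_derive. auto. Qed.

Lemma exd_cont (f:R->R) x : ex_derive f x -> continuous f x.
Proof. exact (@ex_derive_continuous R_AbsRing R_NormedModule f x). Qed.

Lemma gs_cont x : continuous gs x.
Proof. exact (@ex_derive_continuous R_AbsRing R_NormedModule gs x (gs_ex_derive x)). Qed.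

Lemma gs_pos x : 0 < gs x.
Proof. apply exp_pos. Qed.

Lemma gs_le1 x : gs x <= 1.
Proof. unfold gs. rewrite <- exp_0. destruct (Req_dec (-x^2/2) 0) as [e|n].
  rewrite e; lra. left; apply exp_increasing. nra. Qed.

Lemma ex_RInt_gs a b : ex_RInt gs a b.
Proof. apply (@ex_RInt_continuous R_CompleteNormedModule). intros; apply gs_cont. Qed.

Lemma Gs_deriv x : is_derive Gs x (gs x).
Proof.
  apply (is_derive_RInt gs Gs 0 x).
  - apply filter_forall. intros b. apply (@RInt_correct R_CompleteNormedModule), ex_RInt_gs.
  - apply gs_cont.
Qed.

Lemma Gs_diff a b : Gs b - Gs a = RInt gs a b.
Proof.
  unfold Gs. rewrite <- (RInt_Chasles gs 0 a b) by apply ex_RInt_gs.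
  unfold plus; simpl. ring.
Qed.

Lemma Gs_mono a b : a <= b -> Gs a <= Gs b.
Proof.
  intros H. assert (0 <= RInt gs a b).
  { apply RInt_ge_0; auto. apply ex_RInt_gs. intros; left; apply gs_pos. }
  rewrite <- Gs_diff in H0. lra.
Qed.

Lemma Gs_lip a b : a <= b -> Gs b - Gs a <= b - a.
Proof.
  intros H. rewrite Gs_diff.
  assert (H1 := abs_RInt_le_const gs a b 1 H (ex_RInt_gs a b)).
  assert (Rabs (RInt gs a b) <= (b-a)*1).
  { apply H1. intros. rewrite Rabs_pos_eq. apply gs_le1. left; apply gs_pos. }
  apply Rabs_le_between in H0. lra.
Qed.

Lemma Gs_subst x : Gs x = x * RInt (fun s => gs (x*s)) 0 1.
Proof.
  unfold Gs.
  assert (H := RInt_comp_lin gs x 0 0 1).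
  replace (x*0+0) with 0 in H by ring. replace (x*1+0) with x in H by ring.
  rewrite <- H by apply ex_RInt_gs.
  transitivity (scal x (RInt (fun s => gs (x*s)) 0 1)); [|reflexivity].
  rewrite <- (RInt_scal (fun s => gs (x*s)) 0 1 x).
  - apply RInt_ext. intros. unfold scal; simpl; unfold mult; simpl.
    replace (x*x0+0) with (x*x0) by ring. reflexivity.
  - apply (@ex_RInt_continuous R_CompleteNormedModule). intros. 
    apply (continuous_comp (fun s => x*s) gs).
    + apply exd_cont. auto_derive. auto.
    + apply gs_cont.
Qed.

Lemma Gs_odd x : Gs (-x) = - Gs x.
Proof.
  rewrite (Gs_subst (-x)), (Gs_subst x).
  assert (RInt (fun s => gs (-x*s)) 0 1 = RInt (fun s => gs (x*s)) 0 1).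
  { apply RInt_ext. intros. unfold gs. replace ((-x*x0)^2) with ((x*x0)^2) by ring. reflexivity. }
  rewrite H. ring.
Qed.


Definition f2 (x s : R) : R := exp (-(x^2*(1+s^2))/2) / (1+s^2).
Definition d2 (x s : R) : R := - x * exp (-(x^2*(1+s^2))/2).
Definition K (x : R) : R := RInt (f2 x) 0 1.

Lemma pos1s s : 0 < 1 + s^2.
Proof. nra. Qed.

Lemma f2_deriv x s : is_derive (fun z => f2 z s) x (d2 x s).
Proof.
  unfold f2, d2. auto_derive.
  - assert (H := pos1s s). lra.
  - assert (H := pos1s s).
    replace (- (x * (x * 1) * (1 + s * (s * 1))) * / 2) with (-(x^2*(1+s^2))/2) by (unfold Rdiv; ring).
    field. lra.
Qed.

Lemma f2_cont x s : continuous (f2 x) s.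
Proof. apply exd_cont. unfold f2. auto_derive. assert (H := pos1s s). lra. Qed.

Lemma ex_RInt_f2 x a b : ex_RInt (f2 x) a b.
Proof. apply (@ex_RInt_continuous R_CompleteNormedModule). intros; apply f2_cont. Qed.

Lemma d2_cont2 x s : continuity_2d_pt d2 x s.
Proof.
  unfold d2.
  apply continuity_2d_pt_mult.
  - apply continuity_2d_pt_opp, continuity_2d_pt_id1.
  - apply (continuity_1d_2d_pt_comp exp (fun u v => -(u^2*(1+v^2))/2)).
    + apply derivable_continuous_pt, derivable_exp.
    + apply (continuity_2d_pt_ext (fun u v => (- (u*u*(1+v*v))) * / 2)).
      { intros; simpl; unfold Rdiv; ring. }
      apply continuity_2d_pt_mult; [|apply continuity_2d_pt_const].
      apply continuity_2d_pt_opp.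
      apply continuity_2d_pt_mult; [apply continuity_2d_pt_mult; apply continuity_2d_pt_id1|].
      apply continuity_2d_pt_plus; [apply continuity_2d_pt_const|].
      apply continuity_2d_pt_mult; apply continuity_2d_pt_id2.
Qed.

Lemma K_deriv x : is_derive K x (RInt (d2 x) 0 1).
Proof.
  unfold K.
  assert (H := is_derive_RInt_param f2 0 1 x).
  replace (RInt (d2 x) 0 1) with (RInt (fun t => Derive (fun u => f2 u t) x) 0 1).
  - apply H.
    + apply filter_forall. intros y t _. eexists. apply f2_deriv.
    + intros t _. apply (continuity_2d_pt_ext d2).
      { intros; symmetry; apply is_derive_unique, f2_deriv. }
      apply d2_cont2.
    + apply filter_forall. intros; apply ex_RInt_f2.
  - apply RInt_ext. intros. apply is_derive_unique, f2_deriv.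
Qed.

Definition hh (x : R) : R := Gs x ^ 2 + 2 * K x.

Lemma ex_RInt_cont (f : R -> R) a b : (forall x, continuous f x) -> ex_RInt f a b.
Proof. intros H. apply (@ex_RInt_continuous R_CompleteNormedModule). intros; apply H. Qed.

Lemma hh_deriv x : is_derive hh x 0.
Proof.
  set (E := fun s => x * exp (-(x^2*(1+s^2))/2)).
  assert (HE : forall a b, ex_RInt E a b).
  { intros; apply ex_RInt_cont. intros; apply exd_cont; unfold E; auto_derive; auto. }
  assert (H1 : RInt (d2 x) 0 1 = - RInt E 0 1).
  { transitivity (opp (RInt E 0 1)); [|reflexivity].
    rewrite <- RInt_opp by apply HE. apply RInt_ext. intros. unfold E, d2, opp; simpl. ring. }
  assert (H2 : Gs x * gs x = RInt E 0 1).
  { rewrite Gs_subst.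
    transitivity (scal (x * gs x) (RInt (fun s => gs (x*s)) 0 1)).
    { unfold scal; simpl; unfold mult; simpl. ring. }
    rewrite <- RInt_scal.
    - apply RInt_ext. intros. unfold scal; simpl; unfold mult; simpl. unfold E, gs.
      rewrite Rmult_assoc, <- exp_plus. f_equal. f_equal. field.
    - apply ex_RInt_cont. intros. apply exd_cont. unfold gs. auto_derive. auto. }
  unfold hh.
  replace 0 with (2 * Gs x ^ 1 * gs x + 2 * RInt (d2 x) 0 1) by (rewrite H1, <- H2; ring).
  apply (is_derive_plus (fun x => Gs x ^ 2) (fun x => 2 * K x)).
  - replace (2 * Gs x ^ 1 * gs x) with (INR 2 * gs x * Gs x ^ 1) by (simpl; ring).
    apply (is_derive_pow Gs 2 x (gs x)). apply Gs_deriv.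
  - apply (is_derive_scal K x 2). apply K_deriv.
Qed.

Lemma hh_const x : hh x = hh 0.
Proof.
  destruct (MVT_gen hh 0 x (fun _ => 0)) as [c [_ Hc]].
  - intros. apply hh_deriv.
  - intros. apply continuity_pt_filterlim. apply exd_cont. eexists. apply hh_deriv.
  - lra.
Qed.

Lemma hh_0 : hh 0 = PI / 2.
Proof.
  unfold hh, Gs. rewrite RInt_point. unfold zero; simpl.
  unfold K.
  assert (RInt (f2 0) 0 1 = RInt (fun s => / (1 + s^2)) 0 1).
  { apply RInt_ext. intros. unfold f2. replace (-(0^2*(1+x^2))/2) with 0 by field.
    rewrite exp_0. unfold Rdiv. rewrite Rmult_1_l. reflexivity. }
  rewrite H.
  assert (is_RInt (fun s => / (1 + s^2)) 0 1 (minus (atan 1) (atan 0))).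
  { apply (is_RInt_derive atan). 
    - intros. apply is_derive_Reals. apply derivable_pt_lim_atan.
    - intros. apply exd_cont. auto_derive. assert (H1 := pos1s x). lra. }
  rewrite (is_RInt_unique _ _ _ _ H0). rewrite atan_1, atan_0. unfold minus, plus, opp; simpl.
  field.
Qed.

Lemma K_bounds x : 0 <= K x <= exp (- x^2/2).
Proof.
  unfold K. split.
  - apply RInt_ge_0. lra. apply ex_RInt_f2. intros. unfold f2. 
    apply Rle_mult_inv_pos. left; apply exp_pos. apply pos1s.
  - replace (exp (-x^2/2)) with (RInt (fun _ => exp (-x^2/2)) 0 1).
    2: { rewrite RInt_const. unfold scal; simpl; unfold mult; simpl. ring. }
    apply RInt_le. lra. apply ex_RInt_f2. apply ex_RInt_cont. intros; apply continuous_const.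
    intros s Hs. unfold f2. assert (H1 := pos1s s).
    assert (exp (-(x^2*(1+s^2))/2) <= exp (-x^2/2)).
    { destruct (Req_dec (-(x^2*(1+s^2))/2) (-x^2/2)) as [e|n]. rewrite e; lra.
      left. apply exp_increasing. assert (0 <= x^2 * s^2) by (apply Rmult_le_pos; apply pow2_ge_0). lra. }
    apply (Rle_trans _ (exp (-(x^2*(1+s^2))/2))); auto.
    unfold Rdiv. rewrite <- (Rmult_1_r (exp _)) at 2. apply Rmult_le_compat_l.
    left; apply exp_pos. rewrite <- Rinv_1. apply Rinv_le_contravar. lra. 
    assert (0 <= s^2) by apply pow2_ge_0. lra.
Qed.

Definition cG : R := sqrt (2*PI) / 2.

Lemma PI_gt3 : 3 < PI.
Proof. assert (H := PI2_3_2). lra. Qed.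

Lemma sqrt2PI_pos : 0 < sqrt (2*PI).
Proof. apply sqrt_lt_R0. assert (H := PI_gt3). lra. Qed.

Lemma sqrt2PI_ge2 : 2 <= sqrt (2*PI).
Proof. assert (sqrt (2*2) = 2) by (apply sqrt_square; lra). rewrite <- H at 1.
  apply sqrt_le_1_alt. assert (H1 := PI_gt3). lra. Qed.

Lemma cG_sq : cG ^ 2 = PI / 2.
Proof. unfold cG. replace ((sqrt (2*PI)/2)^2) with (sqrt (2*PI) * sqrt (2*PI) / 4) by field.
  rewrite sqrt_sqrt. field. assert (H := PI_gt3). lra. Qed.

Lemma cG_ge1 : 1 <= cG.
Proof. unfold cG. assert (H := sqrt2PI_ge2). lra. Qed.

Lemma Gs_sq x : Gs x ^ 2 = cG^2 - 2 * K x.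
Proof. rewrite cG_sq, <- hh_0, <- (hh_const x). unfold hh. ring. Qed.

Lemma Gs_nonneg x : 0 <= x -> 0 <= Gs x.
Proof. intros. assert (Gs 0 = 0) by (unfold Gs; rewrite RInt_point; reflexivity).
  rewrite <- H0. apply Gs_mono; auto. Qed.

Lemma Gs_tail x : 0 <= x -> 0 <= cG - Gs x <= 2 * exp (-x^2/2) / cG.
Proof.
  intros Hx. assert (H0 := Gs_nonneg x Hx). assert (H1 := Gs_sq x). assert (H2 := K_bounds x).
  assert (H3 := cG_ge1).
  assert (Gs x <= cG).
  { destruct (Rle_dec (Gs x) cG); auto. exfalso. nra. }
  split. lra.
  assert ((cG - Gs x) * (cG + Gs x) = 2 * K x) by nra.
  apply (Rmult_le_reg_r cG). lra. unfold Rdiv. rewrite Rmult_assoc, Rinv_l by lra. nra.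
Qed.

Lemma Gs_bound x : Rabs (Gs x) <= cG.
Proof.
  destruct (Rle_dec 0 x).
  - assert (H := Gs_tail x r). assert (H0 := Gs_nonneg x r). rewrite Rabs_pos_eq; lra.
  - assert (H := Gs_tail (-x) ltac:(lra)). assert (H0 := Gs_nonneg (-x) ltac:(lra)).
    rewrite Gs_odd in *. rewrite Rabs_left1; lra.
Qed.

Definition Phi0 (w : R) : R := 1/2 + Gs w / sqrt (2*PI).

Lemma exp_neg_le y : 0 <= y -> exp (- y) <= 1 / (1 + y).
Proof.
  intros. assert (1 + y <= exp y).
  { destruct (Req_dec y 0). subst. rewrite exp_0. lra. left. apply exp_ineq1. lra. }
  rewrite exp_Ropp. unfold Rdiv. rewrite Rmult_1_l. apply Rinv_le_contravar; lra.
Qed.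

Lemma Phi0_left x : x <= 0 -> 0 <= Phi0 x <= exp (- x^2/2).
Proof.
  intros Hx. assert (H := Gs_tail (-x) ltac:(lra)). rewrite Gs_odd in H.
  replace ((-x)^2) with (x^2) in H by ring.
  assert (H1 := sqrt2PI_ge2). assert (H3 := cG_ge1). assert (E := exp_pos (-x^2/2)).
  unfold Phi0. replace (1/2) with (cG / sqrt (2*PI)) by (unfold cG; field; lra).
  split.
  - replace (cG / sqrt (2 * PI) + Gs x / sqrt (2 * PI)) with ((cG + Gs x) / sqrt (2*PI)) by (field; lra).
    apply Rle_mult_inv_pos; lra.
  - replace (cG / sqrt (2 * PI) + Gs x / sqrt (2 * PI)) with ((cG + Gs x) / sqrt (2*PI)) by (field; lra).
    assert (cs : cG * sqrt (2*PI) = PI).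
    { unfold cG. replace (sqrt (2 * PI) / 2 * sqrt (2 * PI)) with (sqrt (2*PI) * sqrt (2*PI) / 2) by field.
      rewrite sqrt_sqrt. field. assert (H4 := PI_gt3); lra. }
    assert (H4 := PI_gt3).
    set (e := exp (- x ^ 2 / 2)) in *. set (s := sqrt (2*PI)) in *.
    apply (Rmult_le_reg_r s). lra. unfold Rdiv. rewrite Rmult_assoc, Rinv_l by lra. rewrite Rmult_1_r.
    destruct H as [_ H]. unfold Rdiv in H. 
    assert (2 * e * / cG <= e * s).
    { apply (Rmult_le_reg_r cG). lra. rewrite Rmult_assoc, Rinv_l by lra. nra. }
    lra.
Qed.

Lemma Phi0_deriv x : is_derive Phi0 x (gs x / sqrt (2*PI)).
Proof.
  unfold Phi0. replace (gs x / sqrt (2*PI)) with (0 + / sqrt (2*PI) * gs x) by (unfold Rdiv; ring).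
  apply (is_derive_plus (fun _ => 1/2) (fun w => Gs w / sqrt (2*PI))).
  auto_derive; auto.
  apply (is_derive_ext (fun w => / sqrt (2*PI) * Gs w)).
  { intros t. unfold Rdiv. apply Rmult_comm. }
  apply (is_derive_scal Gs x). apply Gs_deriv.
Qed.

Lemma Phi_eq w : Phi w = Phi0 w.
Proof.
  unfold Phi. apply is_RInt_gen_unique.
  replace (Phi0 w) with (Phi0 w - 0) by ring.
  apply (is_RInt_gen_ext (Derive Phi0)).
  - apply filter_forall. intros ab x _. apply is_derive_unique.
    unfold std_normal_density. apply Phi0_deriv.
  - apply is_RInt_gen_Derive.
    + apply filter_forall. intros ab x _. eexists; apply Phi0_deriv.
    + apply filter_forall. intros ab x _.
      apply (continuous_ext (fun x => gs x / sqrt (2*PI))).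
      { intros. symmetry. apply is_derive_unique. apply Phi0_deriv. }
      apply exd_cont. unfold gs. auto_derive. assert (H1 := sqrt2PI_pos). lra.
    + apply filterlim_locally. intros eps.
      exists (- (2/eps + 2)). intros x Hx.
      assert (Hp := cond_pos eps).
      assert (He2 : 0 < 2/eps) by (apply Rdiv_lt_0_compat; lra). assert (Hx0 : x <= 0) by lra.
      assert (H := Phi0_left x Hx0).
      change (Rabs (Phi0 x - 0) < eps). rewrite Rminus_0_r, Rabs_pos_eq by lra.
      assert (Hx2 : 0 <= x^2) by apply pow2_ge_0.
      assert (H2 := exp_neg_le (x^2/2) ltac:(lra)).
      replace (- (x^2/2)) with (-x^2/2) in H2 by field.
      assert (1 / (1 + x^2/2) < eps).
      { apply (Rmult_lt_reg_r (1 + x^2/2)). lra.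
        unfold Rdiv. rewrite Rmult_1_l, Rinv_l by lra.
        assert (x^2 >= (2/eps+2)^2) by nra.
        assert ((2/eps+2)^2 >= 4/eps*2) . { unfold Rdiv. assert (0 < /eps) by (apply Rinv_0_lt_compat; lra). nra. }
        assert (eps * (4/eps) = 4) by (field; lra). nra. }
      lra.
    + apply filterlim_locally. intros eps. unfold at_point. apply ball_center.
Qed.


Definition sel (u v t : R) : R :=
  if Rlt_dec u t then (if Rle_dec t v then 1 else 0) else 0.
Definition ind (t a : R) : R := if Rle_dec t a then 1 else 0.

Lemma sum_tele (f : nat -> R) n : sum_f_R0 (fun k => f (S k) - f k) n = f (S n) - f 0%nat.
Proof. induction n. simpl. ring. rewrite tech5, IHn. ring. Qed.

Lemma sum_abs_le (f g : nat -> R) n : (forall k, (k <= n)%nat -> Rabs (f k) <= g k) ->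
  Rabs (sum_f_R0 f n) <= sum_f_R0 g n.
Proof.
  intros H. eapply Rle_trans. apply sum_f_R0_triangle. apply sum_Rle. intros. apply H. auto.
Qed.

Lemma sum_tele' (f : nat -> R) n : sum_f_R0 (fun k => f k - f (S k)) n = f 0%nat - f (S n).
Proof. induction n. simpl. ring. rewrite tech5, IHn. ring. Qed.

Lemma scal_sumL (A : nat -> R) N x : sum_f_R0 (fun k => x * A k) N = x * sum_f_R0 A N.
Proof. rewrite scal_sum. apply sum_eq. intros; ring. Qed.

Definition cl (u v t : R) := Rmin (Rmax t u) v.

Lemma tele_term (H : R -> R) u v a h : u <= v -> 0 < h ->
  (forall x y, x <= y -> 0 <= H y - H x <= y - x) ->
  Rabs (sel u v a * (H (a + h) - H a) - (H (cl u v (a+h)) - H (cl u v a)))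
    <= h * ((ind a v - ind (a+h) v) + (ind a u - ind (a+h) u)).
Proof.
  intros Huv Hh HH. unfold sel, ind, cl.
  destruct (Rle_dec a u) as [au|au].
  - destruct (Rlt_dec u a); [lra|].
    rewrite (Rmax_right a u) by lra. rewrite (Rmin_left u v) by lra.
    destruct (Rle_dec a v); [|lra].
    destruct (Rle_dec (a+h) u).
    + rewrite (Rmax_right (a+h) u) by lra. rewrite (Rmin_left u v) by lra.
      destruct (Rle_dec (a+h) v); [|lra]. rewrite Rminus_diag, Rmult_0_l, Rminus_diag, Rabs_R0. lra.
    + rewrite (Rmax_left (a+h) u) by lra.
      assert (Hc : u <= Rmin (a+h) v <= a + h) by (unfold Rmin; destruct (Rle_dec (a+h) v); lra).
      assert (HD := HH u (Rmin (a+h) v) ltac:(lra)).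
      rewrite Rmult_0_l, Rminus_0_l, Rabs_Ropp, Rabs_pos_eq by lra.
      destruct (Rle_dec (a+h) v); nra.
  - destruct (Rlt_dec u a); [|lra].
    destruct (Rle_dec a v) as [av|av].
    + rewrite (Rmax_left a u) by lra. rewrite (Rmin_left a v) by lra.
      rewrite (Rmax_left (a+h) u) by lra.
      destruct (Rle_dec (a+h) u); [lra|].
      destruct (Rle_dec (a+h) v).
      * rewrite (Rmin_left (a+h) v) by lra.
        replace (1 * (H (a + h) - H a) - (H (a + h) - H a)) with 0 by ring. rewrite Rabs_R0. lra.
      * rewrite (Rmin_right (a+h) v) by lra.
        assert (HD := HH v (a+h) ltac:(lra)).
        replace (1 * (H (a + h) - H a) - (H v - H a)) with (H (a+h) - H v) by ring.
        rewrite Rabs_pos_eq by lra. lra.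
    + rewrite (Rmax_left a u) by lra. rewrite (Rmin_right a v) by lra.
      rewrite (Rmax_left (a+h) u) by lra. rewrite (Rmin_right (a+h) v) by lra.
      destruct (Rle_dec (a+h) v); [lra|]. destruct (Rle_dec (a+h) u); [lra|].
      rewrite Rmult_0_l, Rminus_diag, Rminus_0_l, Rabs_Ropp, Rabs_R0. lra.
Qed.

Lemma tele_window (H : R -> R) (x0 h u v : R) (n : nat) :
  0 < h -> u <= v -> x0 <= u -> v <= x0 + INR n * h ->
  (forall x y, x <= y -> 0 <= H y - H x <= y - x) ->
  Rabs (sum_f_R0 (fun k => sel u v (x0 + INR k * h) * (H (x0 + INR (S k) * h) - H (x0 + INR k * h))) n
        - (H v - H u)) <= 2 * h.
Proof.
  intros Hh Huv Hx0 Hxn HH.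
  set (xs := fun k => x0 + INR k * h).
  assert (Hxs : forall k, xs (S k) = xs k + h) by (intros; unfold xs; rewrite S_INR; ring).
  assert (ET : sum_f_R0 (fun k => H (cl u v (xs (S k))) - H (cl u v (xs k))) n = H v - H u).
  { rewrite (sum_tele (fun k => H (cl u v (xs k)))). unfold cl.
    assert (E0 : xs 0%nat = x0) by (unfold xs; simpl; ring).
    assert (En : v < xs (S n)) by (rewrite Hxs; unfold xs; lra).
    rewrite E0. rewrite (Rmax_left (xs (S n)) u) by lra. rewrite (Rmin_right _ v) by lra.
    rewrite (Rmax_right x0 u) by lra. rewrite (Rmin_left u v) by lra. reflexivity. }
  rewrite <- ET. rewrite <- minus_sum.
  eapply Rle_trans. apply (sum_abs_le _ (fun k => h * ((ind (xs k) v - ind (xs (S k)) v) + (ind (xs k) u - ind (xs (S k)) u)))).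
  { intros k _. fold (xs k). fold (xs (S k)). rewrite Hxs. apply tele_term; auto. }
  rewrite scal_sumL. rewrite plus_sum.
  rewrite (sum_tele' (fun k => ind (xs k) v)), (sum_tele' (fun k => ind (xs k) u)).
  assert (forall t a, 0 <= ind t a <= 1) by (intros; unfold ind; destruct (Rle_dec t a); lra).
  assert (ind (xs (S n)) v = 0) by (unfold ind; destruct (Rle_dec (xs (S n)) v); auto; rewrite Hxs in r; unfold xs in r; lra).
  assert (ind (xs (S n)) u = 0) by (unfold ind; destruct (Rle_dec (xs (S n)) u); auto; rewrite Hxs in r; unfold xs in r; lra).
  rewrite H1, H2. assert (H3 := H0 (xs 0%nat) v). assert (H4 := H0 (xs 0%nat) u). nra.
Qed.


Lemma gs_deriv x : is_derive gs x (- x * gs x).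
Proof. unfold gs. auto_derive. auto. replace (- (x * (x * 1)) * / 2) with (- x ^ 2 / 2) by (unfold Rdiv; ring). field. Qed.

Lemma gs_lip a b : Rabs (gs b - gs a) <= Rabs (b - a).
Proof.
  destruct (MVT_gen gs a b (fun x => - x * gs x)) as [c [_ Hc]].
  - intros. apply gs_deriv.
  - intros. apply continuity_pt_filterlim. apply gs_cont.
  - rewrite Hc, Rabs_mult. rewrite <- (Rmult_1_l (Rabs (b - a))) at 2.
    apply Rmult_le_compat_r. apply Rabs_pos.
    rewrite Rabs_mult, Rabs_Ropp, (Rabs_pos_eq (gs c)) by (left; apply gs_pos).
    unfold gs. assert (H := exp_ineq1_le (c^2/2)).
    assert (exp (c^2/2) * exp (-c^2/2) = 1) by (rewrite <- exp_plus; replace (c^2/2 + -c^2/2) with 0 by field; apply exp_0).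
    assert (0 < exp (-c^2/2)) by apply exp_pos.
    assert (Rabs c * Rabs c = c^2) by (rewrite <- Rabs_mult; simpl; rewrite Rmult_1_r; apply Rabs_pos_eq; nra).
    assert (0 <= Rabs c) by apply Rabs_pos.
    nra.
Qed.

Lemma riemann_term a h : 0 < h -> Rabs (gs a * h - (Gs (a + h) - Gs a)) <= h * h.
Proof.
  intros Hh. rewrite Gs_diff.
  assert (E : RInt gs a (a+h) - gs a * h = RInt (fun t => gs t - gs a) a (a+h)).
  { assert (H := RInt_minus gs (fun _ => gs a) a (a+h) (ex_RInt_gs _ _)
       (ex_RInt_const _ _ _)).
    simpl in H. unfold minus, plus, opp in H. simpl in H.
    transitivity (RInt (fun x => gs x + - gs a) a (a+h)). 2: reflexivity.
    rewrite H. rewrite RInt_const. unfold scal; simpl; unfold mult; simpl. ring. }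
  replace (gs a * h - RInt gs a (a + h)) with (- (RInt gs a (a+h) - gs a * h)) by ring.
  rewrite Rabs_Ropp, E.
  replace (h * h) with ((a + h - a) * h) by ring.
  apply abs_RInt_le_const. lra.
  apply ex_RInt_cont. intros. apply exd_cont. unfold gs. auto_derive. auto.
  intros t Ht. eapply Rle_trans. apply gs_lip. rewrite Rabs_pos_eq; lra.
Qed.


Lemma ln_le_sub1 z : 0 < z -> ln z <= z - 1.
Proof.
  intros Hz. assert (H := exp_ineq1_le (ln z)). rewrite exp_ln in H by auto. lra.
Qed.

Lemma ln1p_bound u : Rabs u <= /2 -> Rabs (ln (1 + u) - u) <= 2 * u^2.
Proof.
  intros Hu. apply Rabs_le_between in Hu.
  assert (H1 : ln (1+u) <= u) by (assert (H := ln_le_sub1 (1+u) ltac:(lra)); lra).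
  assert (H2 : u / (1+u) <= ln (1+u)).
  { assert (H := ln_le_sub1 (/(1+u)) ltac:(apply Rinv_0_lt_compat; lra)).
    rewrite ln_Rinv in H by lra.
    replace (u/(1+u)) with (- (/(1+u) - 1)) by (field; lra). lra. }
  assert (H3 : u - 2 * u^2 <= u / (1+u)).
  { apply (Rmult_le_reg_r (1+u)). lra. unfold Rdiv. rewrite Rmult_assoc, Rinv_l, Rmult_1_r by lra.
    nra. }
  apply Rabs_le_between. assert (0 <= u^2) by apply pow2_ge_0. lra.
Qed.

Lemma walk (psi : nat -> R) d m k : (m <= k)%nat -> 0 <= d ->
  (forall j, (m <= j < k)%nat -> Rabs (psi (S j) - psi j) <= d) ->
  Rabs (psi k - psi m) <= INR (k - m) * d.
Proof.
  intros Hmk Hd H. induction k as [|k IH].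
  - assert (m = 0%nat) by lia. subst. simpl. unfold Rminus. rewrite Rplus_opp_r, Rabs_R0. lra.
  - destruct (Nat.eq_dec m (S k)).
    + subst. rewrite Nat.sub_diag. simpl. unfold Rminus. rewrite Rplus_opp_r, Rabs_R0. lra.
    + replace (S k - m)%nat with (S (k - m)) by lia. rewrite S_INR.
      replace (psi (S k) - psi m) with ((psi (S k) - psi k) + (psi k - psi m)) by ring.
      eapply Rle_trans. apply Rabs_triang.
      assert (Rabs (psi (S k) - psi k) <= d) by (apply H; lia).
      assert (Rabs (psi k - psi m) <= INR (k - m) * d) by (apply IH; [lia | intros; apply H; lia]).
      lra.
Qed.

Lemma exists_floor N y : 0 <= y -> y < INR N -> exists m, (m < N)%nat /\ INR m <= y < INR m + 1.
Proof.
  induction N as [|N IH]; intros H0 H1.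
  - simpl in H1. lra.
  - destruct (Rlt_dec y (INR N)).
    + destruct (IH H0 r) as [m [Hm Hy]]. exists m. split; auto.
    + exists N. split. lia. rewrite S_INR in H1. lra.
Qed.

Lemma exp_close t e : Rabs t <= e -> e <= /2 -> Rabs (exp t - 1) <= 2 * e.
Proof.
  intros Ht He. apply Rabs_le_between in Ht. apply Rabs_le_between.
  assert (H1 := exp_ineq1_le t).
  assert (H2 := exp_ineq1_le (-e)). 
  assert (exp t <= exp e) by (destruct (Req_dec t e); [subst; lra | left; apply exp_increasing; lra]).
  assert (exp e * exp (-e) = 1) by (rewrite <- exp_plus; replace (e + -e) with 0 by ring; apply exp_0).
  assert (exp e <= 1 + 2 * e).
  { assert (0 < exp e) by apply exp_pos. nra. }
  lra.
Qed.

Section Setup.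
Variable n : nat.
Variable p : R.
Hypothesis hp : 0 < p < 1.

Definition mu := INR n * p.
Definition sg := sqrt (INR n * p * (1-p)).
Definition xk (k : nat) := (INR k - mu) / sg.
Definition bk (k : nat) := binom_pmf n p k.

Hypothesis hsg : 1 <= sg.

Lemma sg_pos : 0 < sg.
Proof. lra. Qed.

Lemma N_pos : 0 < INR n.
Proof.
  destruct (Nat.eq_dec n 0) as [e|ne].
  - exfalso. unfold sg in hsg. rewrite e in hsg. simpl in hsg.
    replace (0*p*(1-p)) with 0 in hsg by ring. rewrite sqrt_0 in hsg. lra.
  - apply lt_0_INR. lia.
Qed.

Lemma sg2 : sg * sg = INR n * p * (1-p).
Proof. unfold sg. apply sqrt_sqrt. assert (H := N_pos). apply Rmult_le_pos. apply Rmult_le_pos; lra. lra. Qed.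

Lemma bk_pos k : 0 < bk k.
Proof. apply pmf_pos; auto. Qed.

Lemma bk_ratio k : (k < n)%nat -> bk (S k) * ((INR k + 1) * (1-p)) = bk k * ((INR n - INR k) * p).
Proof.
  intros H. unfold bk, binom_pmf. rewrite pascal_step3 by auto.
  rewrite minus_INR by lia. rewrite S_INR.
  replace (n - k)%nat with (S (n - S k)) by lia. simpl pow.
  assert (0 <= INR k) by apply pos_INR. field. repeat split; lra.
Qed.

Definition psi (k : nat) := ln (bk k) + xk k ^ 2 / 2.

Lemma xk_S k : xk (S k) = xk k + / sg.
Proof. unfold xk. rewrite S_INR. field. assert (H := sg_pos). lra. Qed.

Lemma psi_step k Y : (k < n)%nat -> 0 <= Y -> Rabs (xk k) <= Y -> 2 * (Y + 1) <= sg ->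
  Rabs (psi (S k) - psi k) <= (1 + 4 * (Y+1)^2) / (sg * sg).
Proof.
  intros Hk HY Hx Hs. assert (Hsp := sg_pos).
  set (s := sg) in *. set (y := xk k).
  assert (Hkx : INR k = mu + s * y) by (unfold y, xk; fold s; field; lra).
  set (u1 := - p * y / s). set (u2 := (1-p) * y / s + (1-p)/(s*s)).
  assert (E1 : (INR n - INR k) * p = s * s * (1 + u1)).
  { transitivity (s*s - s*p*y). 2: (unfold u1; field; lra).
    rewrite Hkx. unfold s. rewrite sg2. unfold mu. ring. }
  assert (E2 : (INR k + 1) * (1-p) = s * s * (1 + u2)).
  { transitivity (s*s + s*(1-p)*y + (1-p)). 2: (unfold u2; field; lra).
    rewrite Hkx. unfold s. rewrite sg2. unfold mu. ring. }
  assert (Hy := proj1 (Rabs_le_between _ _) Hx). fold y in Hy.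
  assert (Hu1 : Rabs u1 <= /2).
  { unfold u1. apply Rabs_le_between. split.
    - apply (Rmult_le_reg_r s). lra. unfold Rdiv. rewrite Rmult_assoc, Rinv_l, Rmult_1_r by lra. nra.
    - apply (Rmult_le_reg_r s). lra. unfold Rdiv. rewrite Rmult_assoc, Rinv_l, Rmult_1_r by lra. nra. }
  assert (Hu2 : Rabs u2 <= /2).
  { unfold u2. apply Rabs_le_between.
    replace ((1 - p) * y / s + (1 - p) / (s * s)) with ((1-p) * (y + /s) / s) by (field; lra).
    assert (0 < /s <= 1) by (split; [apply Rinv_0_lt_compat; lra| rewrite <- Rinv_1; apply Rinv_le_contravar; lra]).
    split.
    - apply (Rmult_le_reg_r s). lra. unfold Rdiv. rewrite Rmult_assoc, Rinv_l, Rmult_1_r by lra. nra.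
    - apply (Rmult_le_reg_r s). lra. unfold Rdiv. rewrite Rmult_assoc, Rinv_l, Rmult_1_r by lra. nra. }
  assert (L1 := ln1p_bound u1 Hu1). assert (L2 := ln1p_bound u2 Hu2).
  assert (Hr := bk_ratio k Hk). rewrite E1, E2 in Hr.
  assert (Hu1' := proj1 (Rabs_le_between _ _) Hu1). assert (Hu2' := proj1 (Rabs_le_between _ _) Hu2).
  assert (Hb : ln (bk (S k)) - ln (bk k) = ln (1 + u1) - ln (1 + u2)).
  { assert (H := f_equal ln Hr). assert (Hbk := bk_pos k). assert (Hbk' := bk_pos (S k)).
    assert (0 < s * s) by (apply Rmult_lt_0_compat; lra).
    rewrite (ln_mult (bk (S k))), (ln_mult (bk k)), (ln_mult (s*s) (1+u2)), (ln_mult (s*s) (1+u1)) in H; try lra;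
    apply Rmult_lt_0_compat; lra. }
  unfold psi. rewrite xk_S. fold y. fold s.
  replace (ln (bk (S k)) + (y + / s) ^ 2 / 2 - (ln (bk k) + y ^ 2 / 2))
     with ((ln (bk (S k)) - ln (bk k)) + y / s + / (2 * (s * s))) by (field; lra).
  rewrite Hb.
  replace (ln (1 + u1) - ln (1 + u2) + y / s + / (2 * (s * s)))
    with ((ln (1+u1) - u1) - (ln (1+u2) - u2) + (p - /2) / (s * s)) by (unfold u1, u2; field; lra).
  assert (Hr0 : 0 < / (s*s)) by (apply Rinv_0_lt_compat, Rmult_lt_0_compat; lra).
  set (r := / (s*s)) in *.
  assert (Hsr : s * s * r = 1) by (unfold r; field; lra).
  assert (A1 : u1^2 <= Y^2 * r).
  { assert (u1 * s = - p * y) by (unfold u1; field; lra).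
    assert (u1^2 = (u1*s)^2 * r) by (unfold r; field; lra).
    rewrite H0, H. assert (y^2 <= Y^2).
    { rewrite <- (pow2_abs y). apply pow_incr. split; [apply Rabs_pos|auto]. }
    assert (0 <= y^2) by apply pow2_ge_0.
    assert (p^2 <= 1) by nra.
    replace ((- p * y)^2) with (p^2 * y^2) by ring. 
    apply Rmult_le_compat_r. lra. nra. }
  assert (A2 : u2^2 <= (Y+1)^2 * r).
  { assert (u2 * s = (1-p) * (y + /s)) by (unfold u2; field; lra).
    assert (u2^2 = (u2*s)^2 * r) by (unfold r; field; lra).
    assert (0 < /s <= 1) by (split; [apply Rinv_0_lt_compat; lra| rewrite <- Rinv_1; apply Rinv_le_contravar; lra]).
    rewrite H0, H. assert (Rabs (y + /s) <= Y + 1) by (apply Rabs_le_between; lra).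
    assert ((y + /s)^2 <= (Y+1)^2). { rewrite <- (pow2_abs (y + /s)). apply pow_incr. split; [apply Rabs_pos|auto]. }
    assert (0 <= (y + /s)^2) by apply pow2_ge_0.
    assert ((1-p)^2 <= 1) by nra.
    replace (((1-p) * (y + /s))^2) with ((1-p)^2 * (y + /s)^2) by ring.
    apply Rmult_le_compat_r. lra. nra. }
  assert (A3 : Rabs ((p - /2) / (s*s)) <= r / 2).
  { unfold Rdiv. fold r. rewrite Rabs_mult, (Rabs_pos_eq r) by lra.
    assert (Rabs (p - /2) <= /2) by (apply Rabs_le_between; lra). nra. }

  apply Rabs_le_between in L1. apply Rabs_le_between in L2. apply Rabs_le_between in A3.
  apply Rabs_le_between. unfold Rdiv. fold r. 
  assert (0 <= Y^2 * r) by (apply Rmult_le_pos; [apply pow2_ge_0|lra]).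
  split; nra.
Qed.

Lemma walk_abs k m Y d : (k <= n)%nat -> (m < n)%nat -> 0 <= d ->
  (forall j, (j < n)%nat -> Rabs (xk j) <= Y -> Rabs (psi (S j) - psi j) <= d) ->
  Rabs (xk k) <= Y -> Rabs (xk m) <= Y ->
  Rabs (psi k - psi m) <= Rabs (INR k - INR m) * d.
Proof.
  intros Hk Hm Hd H Hxk Hxm. assert (Hsp := sg_pos).
  assert (Hbetw : forall j, (Nat.min k m <= j <= Nat.max k m)%nat -> Rabs (xk j) <= Y).
  { intros j Hj. apply Rabs_le_between. apply Rabs_le_between in Hxk. apply Rabs_le_between in Hxm.
    assert (Hmon : forall a b, (a <= b)%nat -> xk a <= xk b).
    { intros a b Hab. unfold xk, Rdiv. apply Rmult_le_compat_r. left; apply Rinv_0_lt_compat; lra.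
      apply le_INR in Hab. lra. }
    destruct (Nat.le_ge_cases k m).
    - rewrite Nat.min_l in Hj by lia. rewrite Nat.max_r in Hj by lia.
      assert (xk k <= xk j) by (apply Hmon; lia). assert (xk j <= xk m) by (apply Hmon; lia). lra.
    - rewrite Nat.min_r in Hj by lia. rewrite Nat.max_l in Hj by lia.
      assert (xk m <= xk j) by (apply Hmon; lia). assert (xk j <= xk k) by (apply Hmon; lia). lra. }
  destruct (Nat.le_ge_cases m k) as [Hmk|Hmk].
  - rewrite (Rabs_pos_eq (_ - INR _)) by (apply le_INR in Hmk; lra). rewrite <- minus_INR by auto.
    apply walk; auto. intros j Hj. apply H. lia. apply Hbetw. lia.
  - rewrite Rabs_minus_sym, (Rabs_minus_sym (INR k)).
    rewrite (Rabs_pos_eq (_ - INR _)) by (apply le_INR in Hmk; lra). rewrite <- minus_INR by auto.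
    apply walk; auto. intros j Hj. apply H. lia. apply Hbetw. lia.
Qed.

Definition eta (M : R) := ((M+1) * (1 + 4 * (M+2)^2) + 1) / sg.

Lemma local_est M : 0 <= M -> 2 * (M + 2) <= sg -> eta M <= /2 ->
  exists A, 0 < A /\ forall k, (k <= n)%nat -> Rabs (xk k) <= M ->
     Rabs (bk k - A * gs (xk k)) <= 2 * eta M * (A * gs (xk k)).
Proof.
  intros HM Hs He. assert (Hsp := sg_pos). assert (HN := N_pos).
  destruct (exists_floor n mu) as [m [Hm Hmu]].
  { unfold mu. apply Rmult_le_pos; lra. }
  { unfold mu. rewrite <- (Rmult_1_r (INR n)) at 2. apply Rmult_lt_compat_l; lra. }
  assert (Hxm : Rabs (xk m) <= / sg).
  { unfold xk. unfold Rdiv. rewrite Rabs_mult, (Rabs_pos_eq (/sg)) by (left; apply Rinv_0_lt_compat; lra).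
    rewrite <- (Rmult_1_l (/sg)) at 2. apply Rmult_le_compat_r. left; apply Rinv_0_lt_compat; lra.
    apply Rabs_le_between. lra. }
  assert (Hisg : / sg <= 1) by (rewrite <- Rinv_1; apply Rinv_le_contravar; lra).
  exists (bk m). split. apply bk_pos.
  intros k Hk Hxk.
  set (Cc := 1 + 4 * (M+1+1)^2).
  assert (HW : Rabs (psi k - psi m) <= Rabs (INR k - INR m) * (Cc / (sg * sg))).
  { apply walk_abs with (Y := M + 1); auto.
    - unfold Cc. apply Rle_mult_inv_pos. assert (0 <= (M+1+1)^2) by apply pow2_ge_0. lra.
      apply Rmult_lt_0_compat; lra.
    - intros j Hj Hxj. apply psi_step; auto; lra.
    - lra.
    - lra. }
  assert (Hkm : Rabs (INR k - INR m) <= sg * (M + 1)).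
  { replace (INR k - INR m) with (sg * (xk k - xk m)) by (unfold xk; field; lra).
    rewrite Rabs_mult, Rabs_pos_eq by lra. apply Rmult_le_compat_l. lra.
    unfold Rminus. eapply Rle_trans. apply Rabs_triang. rewrite Rabs_Ropp. lra. }
  assert (HCc : 0 <= Cc) by (unfold Cc; assert (0 <= (M+1+1)^2) by apply pow2_ge_0; lra).
  assert (Hpsi : Rabs (psi k - psi m) <= (M+1) * Cc / sg).
  { eapply Rle_trans. apply HW. 
    replace ((M+1) * Cc / sg) with ((sg * (M+1)) * (Cc / (sg * sg))) by (field; lra).
    apply Rmult_le_compat_r. apply Rle_mult_inv_pos; auto. apply Rmult_lt_0_compat; lra. auto. }
  set (t := ln (bk k) - ln (bk m) + xk k ^ 2 / 2).
  assert (Ht : Rabs t <= eta M).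
  { unfold t. replace (ln (bk k) - ln (bk m) + xk k ^ 2 / 2) with ((psi k - psi m) + xk m ^ 2 / 2)
      by (unfold psi; ring).
    eapply Rle_trans. apply Rabs_triang.
    assert (Rabs (xk m ^ 2 / 2) <= / sg).
    { rewrite Rabs_pos_eq by (assert (0 <= xk m ^2) by apply pow2_ge_0; lra).
      rewrite <- (pow2_abs (xk m)). assert (0 <= Rabs (xk m)) by apply Rabs_pos. nra. }
    unfold eta. replace (((M + 1) * (1 + 4 * (M + 2) ^ 2) + 1) / sg) with ((M+1) * Cc / sg + / sg)
      by (unfold Cc; field; lra). lra. }
  assert (Hb : bk k = bk m * gs (xk k) * exp t).
  { unfold t, gs. rewrite Rmult_assoc, <- exp_plus.
    replace (- xk k ^ 2 / 2 + (ln (bk k) - ln (bk m) + xk k ^ 2 / 2)) with (ln (bk k) + - ln (bk m)) by field.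
    rewrite exp_plus, exp_Ropp, !exp_ln by apply bk_pos. field.
    assert (H := bk_pos m). lra. }
  rewrite Hb. replace (bk m * gs (xk k) * exp t - bk m * gs (xk k)) with ((bk m * gs (xk k)) * (exp t - 1)) by ring.
  rewrite Rabs_mult, (Rabs_pos_eq (bk m * gs (xk k))).
  2: { left. apply Rmult_lt_0_compat. apply bk_pos. apply gs_pos. }
  assert (H := exp_close t (eta M) Ht He).
  assert (0 < bk m * gs (xk k)) by (apply Rmult_lt_0_compat; [apply bk_pos|apply gs_pos]).
  nra.
Qed.

Definition Pw (u v : R) := sum_f_R0 (fun k => sel u v (xk k) * bk k) n.
Definition Ws (u v : R) := sum_f_R0 (fun k => sel u v (xk k) * gs (xk k)) n.

Lemma xk_lin k : xk k = - mu / sg + INR k * / sg.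
Proof. unfold xk. field. assert (H := sg_pos). lra. Qed.

Lemma sel_01 u v t : 0 <= sel u v t <= 1.
Proof. unfold sel. destruct (Rlt_dec u t); destruct (Rle_dec t v); lra. Qed.

Lemma x0_le M : 0 <= M -> M <= sg -> - mu / sg <= - M.
Proof.
  intros HM Hs. assert (Hsp := sg_pos).
  assert (M * sg <= mu).
  { apply (Rle_trans _ (sg * sg)). nra. rewrite sg2. unfold mu. assert (HN := N_pos).
    assert (INR n * p * (1-p) <= INR n * p * 1) by (apply Rmult_le_compat_l; [apply Rmult_le_pos; lra|lra]). lra. }
  apply (Rmult_le_reg_r sg). auto. unfold Rdiv. rewrite Rmult_assoc, Rinv_l by lra. lra.
Qed.

Lemma xn_ge M : 0 <= M -> M <= sg -> M <= - mu / sg + INR n * / sg.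
Proof.
  intros HM Hs. assert (Hsp := sg_pos).
  assert (M * sg <= INR n * (1-p)).
  { apply (Rle_trans _ (sg * sg)). nra. rewrite sg2. assert (HN := N_pos).
    assert (INR n * p * (1-p) <= INR n * 1 * (1-p)) by (apply Rmult_le_compat_r; [lra|apply Rmult_le_compat_l; lra]). lra. }
  replace (- mu / sg + INR n * / sg) with (INR n * (1-p) / sg) by (unfold mu; field; lra).
  apply (Rmult_le_reg_r sg). auto. unfold Rdiv. rewrite Rmult_assoc, Rinv_l by lra. lra.
Qed.

Lemma riemann_window M u v : 0 <= M -> M <= sg -> -M <= u -> u <= v -> v <= M ->
  Rabs (Ws u v / sg - (Gs v - Gs u)) <= (2 * M + 4) / sg.
Proof.
  intros HM Hs Hu Huv Hv. assert (Hsp := sg_pos).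
  set (h := / sg). set (x0 := - mu / sg).
  assert (Hh : 0 < h) by (apply Rinv_0_lt_compat; lra).
  assert (Hh1 : h <= 1) by (unfold h; rewrite <- Rinv_1; apply Rinv_le_contravar; lra).
  assert (Hx : forall k, xk k = x0 + INR k * h) by (intros; apply xk_lin).
  assert (Hx0 : x0 <= u) by (assert (H := x0_le M HM Hs); unfold x0; lra).
  assert (Hxn : v <= x0 + INR n * h) by (assert (H := xn_ge M HM Hs); unfold x0, h; lra).
  assert (T1 := tele_window Gs x0 h u v n Hh Huv Hx0 Hxn).
  assert (T2 := tele_window (fun t => t) x0 h u v n Hh Huv Hx0 Hxn).
  assert (HG : forall x y, x <= y -> 0 <= Gs y - Gs x <= y - x).
  { intros. split. assert (H1 := Gs_mono x y H). lra. apply Gs_lip; auto. }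
  specialize (T1 HG). specialize (T2 ltac:(intros; lra)).
  set (S1 := sum_f_R0 (fun k => sel u v (x0 + INR k * h) * (Gs (x0 + INR (S k) * h) - Gs (x0 + INR k * h))) n) in *.
  set (S2 := sum_f_R0 (fun k => sel u v (x0 + INR k * h) * ((x0 + INR (S k) * h) - (x0 + INR k * h))) n) in *.
  assert (E2 : S2 = h * sum_f_R0 (fun k => sel u v (x0 + INR k * h)) n).
  { unfold S2. rewrite <- scal_sumL. apply sum_eq. intros. rewrite S_INR. ring. }
  assert (EW : Ws u v / sg = sum_f_R0 (fun k => sel u v (x0 + INR k * h) * (gs (x0 + INR k * h) * h)) n).
  { unfold Ws, Rdiv. rewrite Rmult_comm, scal_sum. apply sum_eq. intros. rewrite Hx. fold h. ring. }
  assert (D : Rabs (Ws u v / sg - S1) <= h * S2).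
  { rewrite EW. unfold S1. rewrite <- minus_sum. rewrite E2, <- scal_sumL, <- scal_sumL.
    apply sum_abs_le. intros k _.
    replace (sel u v (x0 + INR k * h) * (gs (x0 + INR k * h) * h) -
      sel u v (x0 + INR k * h) * (Gs (x0 + INR (S k) * h) - Gs (x0 + INR k * h)))
      with (sel u v (x0 + INR k * h) * (gs (x0 + INR k * h) * h - (Gs (x0 + INR k * h + h) - Gs (x0 + INR k * h))))
      by (rewrite S_INR; replace (x0 + (INR k + 1) * h) with (x0 + INR k * h + h) by ring; ring).
    rewrite Rabs_mult, (Rabs_pos_eq (sel _ _ _)) by apply sel_01.
    assert (H1 := riemann_term (x0 + INR k * h) h Hh). assert (H2 := sel_01 u v (x0 + INR k * h)).
    assert (0 <= Rabs (gs (x0 + INR k * h) * h - (Gs (x0 + INR k * h + h) - Gs (x0 + INR k * h)))) by apply Rabs_pos.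
    nra. }
  apply Rabs_le_between in T1. apply Rabs_le_between in T2. apply Rabs_le_between in D.
  apply Rabs_le_between.
  assert (HS2 : S2 <= v - u + 2 * h) by lra.
  assert (0 <= S2) by (rewrite E2; apply Rmult_le_pos; [lra| apply cond_pos_sum; intros; apply sel_01]).
  assert (h * S2 <= h * (2 * M + 2)) by (apply Rmult_le_compat_l; lra).
  unfold Rdiv. replace ((2 * M + 4) * / sg) with (h * (2 * M + 2) + 2 * h) by (unfold h; field; lra).
  lra.
Qed.

Definition epsR (M : R) := (2 * M + 4) / sg.
Definition eps1 (M : R) := 2 * eta M * (2 * M + epsR M) + epsR M.

Lemma window_est M : 0 <= M -> 2 * (M + 2) <= sg -> eta M <= /2 ->
  exists al, 0 < al /\ forall u v, -M <= u -> u <= v -> v <= M ->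
    Rabs (Pw u v - al * (Gs v - Gs u)) <= al * eps1 M.
Proof.
  intros HM Hs He. assert (Hsp := sg_pos).
  destruct (local_est M HM Hs He) as [A [HA HL]].
  exists (A * sg). split. nra.
  intros u v Hu Huv Hv.
  assert (HR := riemann_window M u v HM ltac:(lra) Hu Huv Hv).
  assert (HPW : Rabs (Pw u v - A * Ws u v) <= 2 * eta M * (A * Ws u v)).
  { unfold Pw, Ws. rewrite <- scal_sumL. rewrite <- minus_sum. rewrite <- scal_sumL.
    apply sum_abs_le. intros k Hk.
    replace (sel u v (xk k) * bk k - A * (sel u v (xk k) * gs (xk k))) with
      (sel u v (xk k) * (bk k - A * gs (xk k))) by ring.
    rewrite Rabs_mult, (Rabs_pos_eq (sel _ _ _)) by apply sel_01.
    unfold sel. destruct (Rlt_dec u (xk k)); [destruct (Rle_dec (xk k) v)|].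
    - rewrite Rmult_1_l. replace (2 * eta M * (A * (1 * gs (xk k)))) with (2 * eta M * (A * gs (xk k))) by ring.
      apply HL; auto. apply Rabs_le_between. lra.
    - rewrite !Rmult_0_l. rewrite Rmult_0_r, Rmult_0_r. lra.
    - rewrite !Rmult_0_l. rewrite Rmult_0_r, Rmult_0_r. lra. }
  assert (HWs : 0 <= Ws u v) by (apply cond_pos_sum; intros; apply Rmult_le_pos; [apply sel_01|left; apply gs_pos]).
  assert (HdG : 0 <= Gs v - Gs u <= 2 * M) by (split; [assert (H := Gs_mono u v Huv); lra| assert (H := Gs_lip u v Huv); lra]).
  assert (Heta : 0 <= eta M).
  { unfold eta. apply Rle_mult_inv_pos; [|lra]. assert (0 <= (M+2)^2) by apply pow2_ge_0. nra. }
  apply Rabs_le_between in HR. apply Rabs_le_between in HPW.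
  set (W := Ws u v) in *. set (dG := Gs v - Gs u) in *.
  assert (EW : W = sg * (W / sg)) by (field; lra).
  set (w := W / sg) in *.
  unfold eps1. fold (epsR M) in *. unfold epsR in HR. fold (epsR M) in HR.
  assert (HeR : 0 <= epsR M) by (unfold epsR; apply Rle_mult_inv_pos; lra).
  apply Rabs_le_between.
  rewrite EW in HPW.
  assert (Hw : w <= 2 * M + epsR M) by lra.
  assert (0 <= w) by (unfold w; apply Rle_mult_inv_pos; lra).
  assert (0 <= A * sg) by nra.
  assert (2 * eta M * (A * (sg * w)) <= (A * sg) * (2 * eta M * (2 * M + epsR M))).
  { replace (2 * eta M * (A * (sg * w))) with ((A * sg) * (2 * eta M * w)) by ring.
    apply Rmult_le_compat_l; auto. apply Rmult_le_compat_l; lra. }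
  assert (- (A*sg) * epsR M <= A * sg * (w - dG) <= (A*sg) * epsR M) by (split; nra).
  replace (A * W) with (A * sg * w) in HPW by (rewrite EW; ring).
  split; nra.
Qed.

Lemma sum_b1 : sum_f_R0 bk n = 1.
Proof.
  destruct (moments n p) as [H0 _]. unfold Ex in H0. rewrite <- H0. apply sum_eq. intros; unfold bk; ring.
Qed.

Lemma sum_x2 : sum_f_R0 (fun k => xk k ^ 2 * bk k) n = 1.
Proof.
  destruct (moments n p) as (H0 & H1 & H2 & _).
  assert (Hsp := sg_pos).
  assert (E : sum_f_R0 (fun k => xk k ^ 2 * bk k) n =
    / (sg * sg) * Ex n p (fun k => mu^2 + (-2 * mu) * INR k + 1 * INR k ^ 2 + 0 * INR k ^ 3 + 0 * INR k ^ 4)).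
  { unfold Ex. rewrite scal_sum. apply sum_eq. intros. unfold xk, bk. field. lra. }
  rewrite E, Ex_lin, H0, H1, H2. rewrite sg2. unfold m1, m2, mu. field.
  assert (H := N_pos). split; [lra|split; lra].
Qed.

Lemma cheb M : 0 < M -> sum_f_R0 (fun k => (1 - sel (-M) M (xk k)) * bk k) n <= / (M^2).
Proof.
  intros HM. 
  apply (Rle_trans _ (sum_f_R0 (fun k => / (M^2) * (xk k ^ 2 * bk k)) n)).
  - apply sum_Rle. intros k _. rewrite <- Rmult_assoc. apply Rmult_le_compat_r. left; apply bk_pos.
    unfold sel. assert (0 < M^2) by nra.
    destruct (Rlt_dec (-M) (xk k)); [destruct (Rle_dec (xk k) M)|].
    + assert (0 <= xk k ^2) by apply pow2_ge_0. assert (0 < / M^2) by (apply Rinv_0_lt_compat; lra). nra.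
    + assert (M^2 <= xk k ^ 2) by nra. 
      apply (Rmult_le_reg_l (M^2)). lra. rewrite <- Rmult_assoc, Rinv_r by lra. lra.
    + assert (M^2 <= xk k ^ 2) by nra. 
      apply (Rmult_le_reg_l (M^2)). lra. rewrite <- Rmult_assoc, Rinv_r by lra. lra.
  - rewrite scal_sumL, sum_x2. lra.
Qed.

Definition Fx (x : R) := sum_f_R0 (fun k => ind (xk k) x * bk k) n.

Lemma dml_bound M x : 4 <= M -> Rabs x < M -> 2 * (M + 2) <= sg -> eta M <= /2 -> eps1 M <= /2 ->
  Rabs (Fx x - Phi0 x) <= 2 * eps1 M + 2 / M^2 + 2 * (2 * exp (- M^2/2) / cG) + exp (- M^2/2).
Proof.
  intros HM Hx Hs He He1. assert (Hsp := sg_pos). apply Rabs_def2 in Hx. 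
  destruct (window_est M ltac:(lra) Hs He) as [al [Hal HW]].
  set (T := 2 * exp (- M^2/2) / cG).
  set (e := exp (- M^2/2)) in *.
  assert (HcG := cG_ge1).
  assert (He0 : 0 < e) by apply exp_pos.
  assert (HeM : e <= / 9).
  { unfold e. replace (- M^2/2) with (- (M^2/2)) by field.
    eapply Rle_trans. apply exp_neg_le. nra. apply (Rmult_le_reg_r (1 + M^2/2)). nra.
    unfold Rdiv. rewrite Rmult_1_l, Rinv_l by nra. nra. }
  assert (HT : 0 <= T <= 2 * e).
  { unfold T. split. apply Rle_mult_inv_pos; lra. unfold Rdiv.
    rewrite <- (Rmult_1_r (2 * e)) at 2. apply Rmult_le_compat_l. lra.
    rewrite <- Rinv_1. apply Rinv_le_contravar; lra. }
  assert (Htail := Gs_tail M ltac:(lra)). fold e in Htail. fold T in Htail.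
  assert (HGo := Gs_odd M).
  assert (HM2 : 0 < M^2) by nra.
  assert (Heps1 : 0 <= eps1 M).
  { unfold eps1, eta, epsR. assert (0 < / sg) by (apply Rinv_0_lt_compat; lra).
    assert (0 <= (M+2)^2) by apply pow2_ge_0. unfold Rdiv.
    assert (0 <= ((M + 1) * (1 + 4 * (M + 2) ^ 2) + 1) * / sg) by (apply Rmult_le_pos; nra).
    assert (0 <= (2 * M + 4) * / sg) by (apply Rmult_le_pos; nra). nra. }
  assert (HP1 := HW (-M) M ltac:(lra) ltac:(lra) ltac:(lra)).
  assert (HC := cheb M ltac:(lra)).
  assert (EP1 : sum_f_R0 (fun k => (1 - sel (-M) M (xk k)) * bk k) n = 1 - Pw (-M) M).
  { transitivity (sum_f_R0 bk n - Pw (-M) M). 2: (rewrite sum_b1; reflexivity).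
    unfold Pw. rewrite <- minus_sum. apply sum_eq. intros; ring. }
  rewrite EP1 in HC.
  assert (HP1le : Pw (-M) M <= 1).
  { apply (Rle_trans _ (sum_f_R0 bk n)); [|rewrite sum_b1; lra]. unfold Pw. apply sum_Rle. intros. assert (H1 := sel_01 (-M) M (xk n0)).
    assert (H2 := bk_pos n0). nra. }
  rewrite HGo in HP1.
  set (D := Gs M - - Gs M) in *.
  apply Rabs_le_between in HP1.
  assert (HDe : 2 * cG - 2 * T <= D <= 2 * cG) by (unfold D; lra).
  assert (Hal1 : al <= 1).
  { assert (H1 : al * D - al * eps1 M <= 1) by lra.
    assert (1 <= D - eps1 M) by lra.
    assert (al * 1 <= al * (D - eps1 M)) by (apply Rmult_le_compat_l; lra). lra. }
  assert (HaD : - (al * eps1 M + / M^2) <= al * D - 1 <= al * eps1 M + / M^2) by (split; lra).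
  set (g := 2 * cG).
  assert (Hag : - (al * eps1 M + / M^2 + 2 * al * T) <= al * g - 1 <= al * eps1 M + / M^2 + 2 * al * T).
  { assert (H1 : 0 <= al * (g - D)) by (apply Rmult_le_pos; unfold g; lra).
    assert (H2 : al * (g - D) <= al * (2 * T)) by (apply Rmult_le_compat_l; unfold g; lra).
    assert (E : al * g - 1 = (al * D - 1) + al * (g - D)) by ring.
    rewrite E. split; lra. }
  assert (HP2 := HW (-M) x ltac:(lra) ltac:(lra) ltac:(lra)).
  rewrite (Gs_odd M) in HP2. apply Rabs_le_between in HP2.
  set (Dl := Gs x - - Gs M) in *.
  assert (HDl : 0 <= Dl <= g).
  { unfold Dl, g. split. assert (H := Gs_mono (-M) x ltac:(lra)). rewrite Gs_odd in H. lra.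
    assert (H := Gs_bound x). apply Rabs_le_between in H. lra. }
  assert (Hg : 2 <= g) by (unfold g; lra).
  assert (HDg : 0 <= Dl / g <= 1).
  { split. apply Rle_mult_inv_pos; lra. apply (Rmult_le_reg_r g). lra. unfold Rdiv.
    rewrite Rmult_assoc, Rinv_l by lra. lra. }
  assert (HP2b : - (2 * eps1 M + / M^2 + 2 * T) <= Pw (-M) x - Dl / g <= 2 * eps1 M + / M^2 + 2 * T).
  { assert (E : Pw (-M) x - Dl / g = (Pw (-M) x - al * Dl) + (Dl / g) * (al * g - 1))
      by (field; lra).
    rewrite E.
    assert (H1 : al * eps1 M <= eps1 M) by (rewrite <- (Rmult_1_l (eps1 M)) at 2; apply Rmult_le_compat_r; lra).
    assert (H2 : al * T <= T) by (rewrite <- (Rmult_1_l T) at 2; apply Rmult_le_compat_r; lra).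
    assert (H3 : Rabs ((Dl / g) * (al * g - 1)) <= al * eps1 M + / M^2 + 2 * al * T).
    { rewrite Rabs_mult. rewrite (Rabs_pos_eq (Dl / g)) by lra.
      assert (Rabs (al * g - 1) <= al * eps1 M + / M^2 + 2 * al * T) by (apply Rabs_le_between; lra).
      assert (0 <= Rabs (al * g - 1)) by apply Rabs_pos.
      apply (Rle_trans _ (1 * Rabs (al * g - 1))). apply Rmult_le_compat_r; lra. lra. }
    apply Rabs_le_between in H3. split; lra. }
  assert (EF : Fx x = sum_f_R0 (fun k => ind (xk k) (-M) * bk k) n + Pw (-M) x).
  { unfold Fx, Pw. rewrite <- plus_sum. apply sum_eq. intros k _.
    unfold ind, sel. destruct (Rle_dec (xk k) x); destruct (Rle_dec (xk k) (-M));
      destruct (Rlt_dec (-M) (xk k)); try lra. }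
  assert (HC1 : 0 <= sum_f_R0 (fun k => ind (xk k) (-M) * bk k) n <= / M^2).
  { split. apply cond_pos_sum. intros. unfold ind. destruct (Rle_dec (xk n0) (-M)).
    rewrite Rmult_1_l; left; apply bk_pos. lra.
    eapply Rle_trans; [|apply HC]. rewrite <- EP1. apply sum_Rle. intros k _.
    apply Rmult_le_compat_r. left; apply bk_pos. unfold ind, sel.
    destruct (Rle_dec (xk k) (-M)); destruct (Rlt_dec (-M) (xk k)); try lra.
    destruct (Rle_dec (xk k) M); lra. }
  assert (EPhi : Phi0 x = Phi0 (-M) + Dl / g).
  { unfold Phi0, Dl, g, cG. rewrite Gs_odd. field. assert (H := sqrt2PI_pos). lra. }
  assert (HPhiM := Phi0_left (-M) ltac:(lra)). replace ((-M)^2) with (M^2) in HPhiM by ring.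
  fold e in HPhiM.
  rewrite EF, EPhi. apply Rabs_le_between.
  replace (2 / M^2) with (/M^2 + /M^2) by (field; lra).
  fold T. split; lra.
Qed.

End Setup.

Lemma dml_uniform x eps : 0 < eps -> exists S, forall n p, 0 < p < 1 -> S <= sg n p ->
  Rabs (Fx n p x - Phi0 x) <= eps.
Proof.
  intros He.
  set (M := Rabs x + 4 + 40 / eps).
  assert (Hx := Rabs_pos x).
  assert (H40 : 0 < 40 / eps) by (apply Rdiv_lt_0_compat; lra).
  assert (HM4 : 4 <= M) by (unfold M; lra).
  set (K1 := (M+1) * (1 + 4 * (M+2)^2) + 1).
  assert (HK1 : 1 <= K1) by (unfold K1; assert (0 <= (M+2)^2) by apply pow2_ge_0; nra).
  set (K2 := 2 * K1 * (4 * M + 4) + 2 * M + 4).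
  assert (HK2 : 0 < K2) by (unfold K2; nra).
  assert (H4e : 0 < 4 / eps) by (apply Rdiv_lt_0_compat; lra).
  exists (Rmax (2 * (M+2)) (Rmax (2 * K1) (K2 * (4 / eps + 2)))).
  intros n p hp Hs.
  assert (Hs1 := Rmax_l (2 * (M+2)) (Rmax (2 * K1) (K2 * (4 / eps + 2)))).
  assert (Hs2 := Rmax_r (2 * (M+2)) (Rmax (2 * K1) (K2 * (4 / eps + 2)))).
  assert (Hs3 := Rmax_l (2 * K1) (K2 * (4 / eps + 2))).
  assert (Hs4 := Rmax_r (2 * K1) (K2 * (4 / eps + 2))).
  set (s := sg n p) in *.
  assert (hsg : 1 <= s) by lra.
  assert (Hsp : 0 < s) by lra.
  assert (Heta : eta n p M = K1 / s) by reflexivity.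
  assert (Heta2 : eta n p M <= / 2).
  { rewrite Heta. apply (Rmult_le_reg_r s). lra. unfold Rdiv. rewrite Rmult_assoc, Rinv_l by lra. lra. }
  assert (HeR : epsR n p M = (2 * M + 4) / s) by reflexivity.
  assert (Heps1 : eps1 n p M <= K2 / s).
  { unfold eps1. rewrite HeR, Heta.
    assert ((2 * M + 4) / s <= 2 * M + 4).
    { unfold Rdiv. rewrite <- (Rmult_1_r (2 * M + 4)) at 2. apply Rmult_le_compat_l. lra.
      rewrite <- Rinv_1. apply Rinv_le_contravar; lra. }
    assert (0 <= K1 / s) by (apply Rle_mult_inv_pos; lra).
    assert (2 * (K1 / s) * (2 * M + (2 * M + 4) / s) <= 2 * (K1 / s) * (4 * M + 4)).
    { apply Rmult_le_compat_l. lra. lra. }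
    unfold K2. replace ((2 * K1 * (4 * M + 4) + 2 * M + 4) / s) with (2 * (K1 / s) * (4 * M + 4) + (2 * M + 4) / s)
      by (field; lra). lra. }
  assert (HK2s : K2 / s <= / (4 / eps + 2)).
  { assert (E : K2 / s = (K2 * (4/eps+2)) * / ((4/eps+2) * s)) by (field; lra).
    rewrite E. replace (/ (4/eps+2)) with (s * / ((4/eps+2) * s)) by (field; lra).
    apply Rmult_le_compat_r. left; apply Rinv_0_lt_compat; nra. lra. }
  assert (Hq1 : / (4 / eps + 2) <= / 2) by (apply Rinv_le_contravar; lra).
  assert (Hq2 : / (4 / eps + 2) <= eps / 4).
  { apply (Rmult_le_reg_l (4 / eps + 2)). lra. rewrite Rinv_r by lra.
    replace ((4 / eps + 2) * (eps / 4)) with (1 + eps / 2) by (field; lra). lra. }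
  assert (HD := dml_bound n p hp hsg M x HM4 ltac:(unfold M; lra) ltac:(unfold s in *; lra) Heta2 ltac:(lra)).
  eapply Rle_trans. apply HD.
  set (e := exp (- M^2/2)).
  assert (HM2 : 0 < M^2) by nra.
  assert (He2 : e <= 2 / M^2).
  { unfold e. replace (- M^2/2) with (- (M^2/2)) by field.
    eapply Rle_trans. apply exp_neg_le. nra. apply (Rmult_le_reg_r (1 + M^2/2)). nra.
    replace (1 / (1 + M^2/2) * (1 + M^2/2)) with 1 by (field; nra).
    replace (2 / M^2 * (1 + M^2/2)) with (2 / M^2 + 1) by (field; nra).
    assert (0 < 2 / M^2) by (apply Rdiv_lt_0_compat; lra). lra. }
  assert (He0 : 0 < e) by apply exp_pos.
  assert (HcG := cG_ge1).
  assert (HT : 2 * e / cG <= 2 * e).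
  { unfold Rdiv. rewrite <- (Rmult_1_r (2 * e)) at 2. apply Rmult_le_compat_l. lra.
    rewrite <- Rinv_1. apply Rinv_le_contravar; lra. }
  assert (HMM : 1 / M^2 <= eps / 160).
  { assert (M * (eps/40) >= 4 * (eps/40)) by (apply Rmult_ge_compat_r; lra).
    assert (M >= 40 / eps) by (unfold M; lra).
    assert (M * eps >= 40) by (apply (Rmult_ge_compat_r eps) in H0; [|lra]; unfold Rdiv in H0; rewrite Rmult_assoc, Rinv_l in H0 by lra; lra).
    apply (Rmult_le_reg_r (M^2)). lra. unfold Rdiv. rewrite Rmult_1_l, Rinv_l by lra.
    nra. }
  assert (2 / M^2 = 2 * (1 / M^2)) by (field; lra).
  lra.
Qed.


Lemma sqrt_close z : -1/2 <= z -> Rabs (sqrt (1 + z) - 1) <= Rabs z.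
Proof.
  intros Hz. assert (H0 : 0 <= sqrt (1+z)) by apply sqrt_pos.
  assert (H1 : sqrt (1+z) * sqrt (1+z) = 1 + z) by (apply sqrt_sqrt; lra).
  assert (E : (sqrt (1+z) - 1) * (sqrt (1+z) + 1) = z) by nra.
  assert (E2 : sqrt (1+z) - 1 = z / (sqrt (1+z) + 1)).
  { apply (Rmult_eq_reg_r (sqrt (1+z) + 1)). rewrite E. field. lra. lra. }
  rewrite E2. unfold Rdiv. rewrite Rabs_mult. rewrite <- (Rmult_1_r (Rabs z)) at 2.
  apply Rmult_le_compat_l. apply Rabs_pos.
  rewrite Rabs_pos_eq by (left; apply Rinv_0_lt_compat; lra).
  assert (HH : /(sqrt (1+z)+1) <= /1) by (apply Rinv_le_contravar; lra). rewrite Rinv_1 in HH. lra.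
Qed.

Section Sand.
Variable n : nat.
Variable p : R.
Hypothesis hp : 0 < p < 1.
Hypothesis hsg : 1 <= sg n p.

Let s := sg n p.
Let m := mu n p.
Let a := m + /2.
Let tau := s / (2 * a).
Let rho := (1 - 2*p) / a + (s*s) / (2 * a^2) + (1 - 6*p*(1-p)) / (4 * a^2).
Let r := sqrt (1 + rho).
Let phi (t : R) := t + tau * (t^2 - 1).

Lemma s2_eq : s * s = m * (1-p).
Proof. unfold s, m, mu. rewrite sg2; auto. Qed.

Lemma m_pos : 0 < m.
Proof. unfold m, mu. assert (H := N_pos n p hsg). apply Rmult_lt_0_compat; lra. Qed.

Lemma VR_form : VR n p = (s * a) ^ 2 * (1 + rho).
Proof.
  rewrite VR_eq. cbv zeta. assert (E := s2_eq). assert (Hm := m_pos).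
  replace (INR n * p * (1-p)) with (s*s) by (rewrite E; unfold m, mu; ring).
  replace (INR n * p) with m by reflexivity.
  unfold rho, a. field. lra.
Qed.

Lemma s_pos : 0 < s.
Proof. unfold s. lra. Qed.

Lemma xk_inv k : INR k = m + s * xk n p k.
Proof. unfold xk, s, m. field. lra. Qed.

Lemma regions_form k : regions k - ER n p = a * s * xk n p k + s * s * (xk n p k ^ 2 - 1) / 2.
Proof.
  rewrite ER_eq. unfold regions. rewrite xk_inv. assert (E := s2_eq).
  replace (INR n * p * (1-p)) with (s*s) by (rewrite E; unfold m, mu; ring).
  replace (INR n * p) with m by reflexivity. unfold a. field.
Qed.

Hypothesis hm4 : 4 <= m.

Lemma rho_bound : Rabs rho <= 2 / m.
Proof.
  assert (Hm := m_pos). assert (Ha : 0 < a) by (unfold a; lra).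
  set (ia := / a).
  assert (Hia : 0 < ia) by (apply Rinv_0_lt_compat; lra).
  assert (Hiaa : ia * a = 1) by (unfold ia; field; lra).
  assert (Hiam : ia * m <= 1) by (unfold a in Hiaa; nra).
  assert (Hia1 : ia <= 1/4) by nra.
  assert (E : rho = (1 - 2*p) * ia + (s*s) * ia^2 / 2 + (1 - 6*p*(1-p)) * ia^2 / 4) by (unfold rho, ia; field; lra).
  assert (Hs2 : s * s <= m) by (rewrite s2_eq; nra).
  assert (Hs0 : 0 <= s * s) by nra.
  assert (Hpq : Rabs (1 - 6*p*(1-p)) <= 1) by (apply Rabs_le_between; nra).
  assert (H1p : Rabs (1 - 2*p) <= 1) by (apply Rabs_le_between; nra).
  apply Rabs_le_between in Hpq. apply Rabs_le_between in H1p.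
  assert (Hsia : s * s * ia^2 <= ia) by nra.
  assert (Hiam' : ia <= / m) by (apply (Rmult_le_reg_r m); [lra| rewrite Rinv_l by lra; lra]).
  assert (Hia2 : ia^2 <= ia) by nra.
  rewrite E. apply Rabs_le_between. unfold Rdiv. split; nra.
Qed.

Lemma tau_bound : 0 <= tau /\ tau ^ 2 <= / (4 * m).
Proof.
  assert (Hm := m_pos). assert (Ha : 0 < a) by (unfold a; lra). assert (Hs := s_pos).
  split. unfold tau. apply Rle_mult_inv_pos; lra.
  assert (Hs2 : s * s <= m) by (rewrite s2_eq; nra).
  unfold tau. replace ((s / (2 * a))^2) with (s * s / (4 * a * a)) by (field; lra).
  apply (Rmult_le_reg_r (4 * a * a)). nra.
  replace (s * s / (4 * a * a) * (4 * a * a)) with (s * s) by (field; lra).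
  replace (/ (4 * m) * (4 * a * a)) with (a * a / m) by (field; lra).
  apply (Rmult_le_reg_r m). lra. replace (a * a / m * m) with (a * a) by (field; lra).
  unfold a. nra.
Qed.

Lemma rho_gt : -1/2 <= rho.
Proof.
  assert (H := rho_bound). apply Rabs_le_between in H.
  assert (2 / m <= 1/2). { apply (Rmult_le_reg_r m). lra. unfold Rdiv. rewrite Rmult_assoc, Rinv_l by lra. lra. }
  lra.
Qed.

Lemma r_pos : 0 < r.
Proof. unfold r. apply sqrt_lt_R0. assert (H := rho_gt). lra. Qed.

Lemma T_eq k : (regions k - ER n p) / sqrt (VR n p) = phi (xk n p k) / r.
Proof.
  rewrite regions_form, VR_form. assert (Hs := s_pos). assert (Hm := m_pos).
  assert (Ha : 0 < a) by (unfold a; lra). assert (Hr := r_pos). assert (Hrho := rho_gt).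
  rewrite sqrt_mult_alt by (apply pow2_ge_0). rewrite sqrt_pow2 by nra. fold r.
  unfold phi, tau. field. lra.
Qed.

Lemma phi_mono t1 t2 : - (a / s) <= t1 -> t1 <= t2 -> phi t1 <= phi t2.
Proof.
  intros H1 H2. assert (Hs := s_pos). assert (Hm := m_pos). assert (Ha : 0 < a) by (unfold a; lra).
  assert (Htau := proj1 tau_bound).
  assert (E : phi t2 - phi t1 = (t2 - t1) * (1 + tau * (t1 + t2))) by (unfold phi; ring).
  assert (E2 : tau * (a / s) = /2) by (unfold tau; field; lra).
  assert (0 <= 1 + tau * (t1 + t2)) by nra.
  assert (0 <= (t2 - t1) * (1 + tau * (t1 + t2))) by (apply Rmult_le_pos; lra).
  lra.
Qed.

Lemma as_ge L : 0 <= L -> L^2 <= m -> L <= a / s.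
Proof.
  intros HL HLm. assert (Hs := s_pos). assert (Hm := m_pos). assert (Ha : 0 < a) by (unfold a; lra).
  assert (Hs2 : s * s <= m) by (rewrite s2_eq; nra).
  assert (HL2 : (L * s)^2 <= a^2).
  { replace ((L*s)^2) with (L^2 * (s*s)) by ring. apply (Rle_trans _ (m * m)). 
    apply Rmult_le_compat; try lra. apply pow2_ge_0. nra. unfold a. nra. }
  assert (L * s <= a) by nra.
  apply (Rmult_le_reg_r s). lra. unfold Rdiv. rewrite Rmult_assoc, Rinv_l by lra. lra.
Qed.

Lemma xk_ge k : - (a / s) <= xk n p k.
Proof.
  assert (Hs := s_pos). assert (Hm := m_pos).
  assert (H := xk_inv k). assert (0 <= INR k) by apply pos_INR.
  assert (- a <= s * xk n p k) by (unfold a; lra).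
  apply (Rmult_le_reg_l s). lra. replace (s * - (a / s)) with (- a) by (field; lra). lra.
Qed.

Lemma sandwich_term w d k : 0 < d ->
  (Rabs w + d)^2 <= m -> ((Rabs w + d)^2 + 1)^2 / d^2 <= m -> 8 * (Rabs w + 1) / d <= m ->
  ind (xk n p k) (w - d) <= (if Rle_dec ((regions k - ER n p) / sqrt (VR n p)) w then 1 else 0)
  <= ind (xk n p k) (w + d).
Proof.
  intros Hd HL1 HL2 HL3.
  set (L := Rabs w + d) in *. assert (HL0 : 0 <= L) by (unfold L; assert (H := Rabs_pos w); lra).
  assert (Hs := s_pos). assert (Hm := m_pos). assert (Hr := r_pos).
  assert (HaL := as_ge L HL0 HL1).
  assert (Hw := Rabs_pos w). assert (Hw2 : - Rabs w <= w <= Rabs w) by (apply Rabs_le_between; lra).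
  assert (Hw3 : - L <= w - d /\ w + d <= L) by (unfold L; lra).
  destruct tau_bound as [Ht0 Ht2].
  assert (Htau : tau <= d / (2 * (L^2 + 1))).
  { assert (Hq : 0 < d / (2 * (L^2 + 1))) by (apply Rdiv_lt_0_compat; nra).
    apply Rsqr_incr_0_var. 2: lra. unfold Rsqr. replace (tau * tau) with (tau^2) by ring.
    eapply Rle_trans. apply Ht2. 
    replace (d / (2 * (L ^ 2 + 1)) * (d / (2 * (L ^ 2 + 1)))) with (/ (4 * ((L^2+1)^2 / d^2))) by (field; nra).
    apply Rinv_le_contravar. assert (0 < (L^2+1)^2 / d^2) by (apply Rdiv_lt_0_compat; nra). lra. lra. }
  assert (Hrc : Rabs (r - 1) <= 2 / m) by (eapply Rle_trans; [apply sqrt_close, rho_gt | apply rho_bound]).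
  assert (Hwr : Rabs (w * r - w) <= d / 4).
  { replace (w * r - w) with (w * (r - 1)) by ring. rewrite Rabs_mult.
    apply (Rle_trans _ (Rabs w * (2 / m))). apply Rmult_le_compat_l; auto.
    apply (Rle_trans _ ((Rabs w + 1) * (2 / m))). apply Rmult_le_compat_r. apply Rle_mult_inv_pos; lra. lra.
    apply (Rmult_le_reg_r m). lra. replace ((Rabs w + 1) * (2 / m) * m) with (2 * (Rabs w + 1)) by (field; lra).
    apply (Rmult_le_reg_r (4 / d)). apply Rdiv_lt_0_compat; lra.
    replace (d / 4 * m * (4 / d)) with m by (field; lra).
    replace (2 * (Rabs w + 1) * (4 / d)) with (8 * (Rabs w + 1) / d) by (field; lra). lra. }
  apply Rabs_le_between in Hwr.
  assert (HtL : tau * L^2 <= d / 2).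
  { apply (Rle_trans _ (d / (2 * (L^2 + 1)) * L^2)). apply Rmult_le_compat_r; [apply pow2_ge_0|auto].
    replace (d / (2 * (L ^ 2 + 1)) * L ^ 2) with (d / 2 * (L^2 / (L^2 + 1))) by (field; nra).
    assert (L^2 / (L^2+1) <= 1). { apply (Rmult_le_reg_r (L^2+1)). nra. 
      replace (L ^ 2 / (L ^ 2 + 1) * (L ^ 2 + 1)) with (L^2) by (field; nra). lra. }
    assert (0 <= L^2 / (L^2+1)) by (apply Rle_mult_inv_pos; nra). nra. }
  assert (Ht1 : tau <= d / 2).
  { apply (Rle_trans _ (d / (2 * (L^2 + 1)))); auto. unfold Rdiv. apply Rmult_le_compat_l. lra.
    apply Rinv_le_contravar. lra. nra. }
  rewrite T_eq. set (x := xk n p k). assert (Hx := xk_ge k). fold x in Hx.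
  unfold ind. split.
  - destruct (Rle_dec x (w - d)); [|destruct (Rle_dec _ w); lra].
    destruct (Rle_dec (phi x / r) w). lra. exfalso. apply n0.
    apply (Rmult_le_reg_r r). auto. unfold Rdiv. rewrite Rmult_assoc, Rinv_l, Rmult_1_r by lra.
    assert (Hp1 := phi_mono x (w - d) Hx r0).
    assert (phi (w - d) <= w - d + tau * L^2).
    { unfold phi. assert ((w-d)^2 <= L^2) by nra. nra. }
    lra.
  - destruct (Rle_dec (phi x / r) w); [|destruct (Rle_dec x (w+d)); lra].
    destruct (Rle_dec x (w + d)). lra. exfalso.
    assert (Hp1 := phi_mono (w + d) x ltac:(lra) ltac:(lra)).
    assert (w + d - tau <= phi (w + d)) by (unfold phi; assert (0 <= (w+d)^2) by apply pow2_ge_0; nra).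
    assert (phi x <= w * r).
    { apply (Rmult_le_reg_r (/ r)). apply Rinv_0_lt_compat; lra. rewrite Rmult_assoc, Rinv_r, Rmult_1_r by lra. auto. }
    lra.
Qed.

End Sand.


Lemma Phi0_mono a b : a <= b -> Phi0 a <= Phi0 b.
Proof.
  intros H. unfold Phi0. assert (H1 := Gs_mono a b H). assert (H2 := sqrt2PI_pos).
  unfold Rdiv. assert (Gs a * / sqrt (2 * PI) <= Gs b * / sqrt (2*PI)).
  { apply Rmult_le_compat_r. left; apply Rinv_0_lt_compat; lra. lra. } lra.
Qed.

Lemma Phi0_lip a b : a <= b -> Phi0 b - Phi0 a <= (b - a) / 2.
Proof.
  intros H. unfold Phi0. assert (H1 := Gs_lip a b H). assert (H2 := sqrt2PI_ge2).
  assert (H3 := Gs_mono a b H).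
  replace (1 / 2 + Gs b / sqrt (2 * PI) - (1 / 2 + Gs a / sqrt (2 * PI))) with ((Gs b - Gs a) / sqrt (2*PI)) by (field; lra).
  unfold Rdiv. apply (Rle_trans _ ((b - a) * / sqrt (2 * PI))).
  apply Rmult_le_compat_r. left; apply Rinv_0_lt_compat; lra. lra.
  apply Rmult_le_compat_l. lra. apply Rinv_le_contravar; lra.
Qed.

Lemma Phi0_sym x : Phi0 (-x) = 1 - Phi0 x.
Proof. unfold Phi0. rewrite Gs_odd. field. assert (H := sqrt2PI_pos). lra. Qed.

Lemma Phi0_range x : 0 <= Phi0 x <= 1.
Proof.
  destruct (Rle_dec x 0).
  - assert (H := Phi0_left x r). assert (exp (- x^2/2) <= 1).
    { rewrite <- exp_0. destruct (Req_dec (-x^2/2) 0) as [e|e]. rewrite e; lra.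
      left; apply exp_increasing. assert (0 <= x^2) by apply pow2_ge_0. lra. } lra.
  - assert (H := Phi0_left (-x) ltac:(lra)). rewrite Phi0_sym in H.
    assert (exp (- (-x)^2/2) <= 1).
    { rewrite <- exp_0. destruct (Req_dec (-(-x)^2/2) 0) as [e|e]. rewrite e; lra.
      left; apply exp_increasing. assert (0 <= (-x)^2) by apply pow2_ge_0. lra. } lra.
Qed.

Lemma prob_mono n p a b : 0 < p < 1 -> a <= b -> prob_std_le n p a <= prob_std_le n p b.
Proof.
  intros hp H. unfold prob_std_le. apply sum_Rle. intros k _.
  assert (Hb := pmf_pos n p k hp).
  destruct (Rle_dec _ a); destruct (Rle_dec _ b); lra.
Qed.

Lemma prob_range n p a : 0 < p < 1 -> 0 <= prob_std_le n p a <= 1.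
Proof.
  intros hp. destruct (moments n p) as [H0 _]. unfold Ex in H0. split.
  - unfold prob_std_le. apply cond_pos_sum. intros k. assert (Hb := pmf_pos n p k hp).
    destruct (Rle_dec _ a); lra.
  - rewrite <- H0. unfold prob_std_le. apply sum_Rle. intros k _. assert (Hb := pmf_pos n p k hp).
    destruct (Rle_dec _ a); lra.
Qed.

Lemma growth (p : nat -> R) (hp : forall n, 0 < p n < 1)
  (hgrowth : is_lim_seq
     (fun n => Rpower (INR n) (1/9) * p n * Rpower (1 - p n) (1/3)) p_infty) :
  forall B, 0 <= B -> exists N, forall n, (N <= n)%nat -> B <= mu n (p n) /\ B <= sg n (p n).
Proof.
  intros B HB. apply is_lim_seq_spec in hgrowth. destruct (hgrowth (B^2 + 1)) as [N HN].
  exists (S N). intros n Hn. specialize (HN n ltac:(lia)).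
  destruct (hp n) as [hp0 hp1].
  set (x := INR n) in *. set (q := 1 - p n) in *.
  assert (Hx : 1 <= x) by (unfold x; apply (le_INR 1); lia).
  set (A := Rpower x (1/9)) in *. set (Q := Rpower q (1/3)) in *.
  assert (HA : 0 < A) by (unfold A, Rpower; apply exp_pos).
  assert (HQ : 0 < Q) by (unfold Q, Rpower; apply exp_pos).
  assert (HAx : A <= x) by (unfold A; rewrite <- (Rpower_1 x) at 2 by lra; apply Rle_Rpower; lra).
  assert (HQ1 : Q <= 1).
  { unfold Q, Rpower. apply (Rle_trans _ (exp 0)); [|rewrite exp_0; lra].
    assert (ln q < 0) by (rewrite <- ln_1; apply ln_increasing; unfold q; lra).
    left; apply exp_increasing. lra. }
  assert (HA3 : A^3 <= x).
  { unfold A. rewrite <- Rpower_pow by (unfold Rpower; apply exp_pos). rewrite Rpower_mult.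
    rewrite <- (Rpower_1 x) at 2 by lra. apply Rle_Rpower. lra. simpl. lra. }
  assert (HQ3 : Q^3 = q).
  { unfold Q. rewrite <- Rpower_pow by (unfold Rpower; apply exp_pos). rewrite Rpower_mult.
    replace (1/3 * INR 3) with 1 by (simpl; field). apply Rpower_1. unfold q; lra. }
  set (g := A * p n * Q) in *.
  assert (Hg1 : 1 <= g) by nra.
  assert (Hmu : g <= x * p n).
  { unfold g. assert (A * p n * Q <= A * p n * 1) by (apply Rmult_le_compat_l; nra). nra. }
  assert (Hs2 : g^3 <= x * p n * q).
  { unfold g. replace ((A * p n * Q)^3) with (A^3 * p n ^ 3 * Q^3) by ring. rewrite HQ3.
    assert (p n ^ 3 <= p n) by nra. assert (0 < q) by (unfold q; lra).
    apply Rmult_le_compat_r. lra. apply Rmult_le_compat; try nra. }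
  split.
  - unfold mu. fold x. nra.
  - unfold sg. fold x. fold q. 
    assert (B^2 <= x * p n * q) by nra.
    rewrite <- (sqrt_pow2 B) by auto. apply sqrt_le_1_alt. auto.
Qed.

Lemma sandwich_sum n p w d : 0 < p < 1 -> 1 <= sg n p -> 4 <= mu n p -> 0 < d ->
  (Rabs w + d)^2 <= mu n p -> ((Rabs w + d)^2 + 1)^2 / d^2 <= mu n p -> 8 * (Rabs w + 1) / d <= mu n p ->
  Fx n p (w - d) <= prob_std_le n p w <= Fx n p (w + d).
Proof.
  intros hp hsg hm4 Hd H1 H2 H3. unfold Fx, prob_std_le. split; apply sum_Rle; intros k _;
  assert (Hb := pmf_pos n p k hp); unfold bk;
  assert (HS := sandwich_term n p hp hsg hm4 w d k Hd H1 H2 H3);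
  destruct (Rle_dec ((regions k - ER n p) / sqrt (VR n p)) w); nra.
Qed.

Lemma pointwise (p : nat -> R) (hp : forall n, 0 < p n < 1)
  (hgrowth : is_lim_seq
     (fun n => Rpower (INR n) (1/9) * p n * Rpower (1 - p n) (1/3)) p_infty) :
  forall w eps, 0 < eps -> exists N, forall n, (N <= n)%nat ->
    Rabs (prob_std_le n (p n) w - Phi0 w) <= eps.
Proof.
  intros w eps He.
  destruct (dml_uniform (w - eps) (eps/2) ltac:(lra)) as [S1 HS1].
  destruct (dml_uniform (w + eps) (eps/2) ltac:(lra)) as [S2 HS2].
  set (L := Rabs w + eps).
  assert (Hw := Rabs_pos w).
  set (B := 5 + L^2 + (L^2+1)^2/eps^2 + 8 * (Rabs w + 1) / eps + Rabs S1 + Rabs S2).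
  assert (HB1 : 0 <= (L^2+1)^2/eps^2) by (apply Rle_mult_inv_pos; nra).
  assert (HB2 : 0 <= 8 * (Rabs w + 1) / eps) by (apply Rle_mult_inv_pos; nra).
  assert (HL2 : 0 <= L^2) by apply pow2_ge_0.
  assert (HS1a := Rabs_pos S1). assert (HS2a := Rabs_pos S2).
  assert (HS1b := Rle_abs S1). assert (HS2b := Rle_abs S2).
  destruct (growth p hp hgrowth B ltac:(unfold B; lra)) as [N HN].
  exists N. intros n Hn. destruct (HN n Hn) as [Hmu Hsg].
  assert (Hs := sandwich_sum n (p n) w eps (hp n) ltac:(unfold B in Hsg; lra) ltac:(unfold B in Hmu; lra) He
    ltac:(unfold B in Hmu; fold L; lra) ltac:(unfold B in Hmu; fold L; lra) ltac:(unfold B in Hmu; lra)).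
  assert (H1 := HS1 n (p n) (hp n) ltac:(unfold B in Hsg; lra)).
  assert (H2 := HS2 n (p n) (hp n) ltac:(unfold B in Hsg; lra)).
  apply Rabs_le_between in H1. apply Rabs_le_between in H2.
  assert (Hl1 := Phi0_lip (w - eps) w ltac:(lra)).
  assert (Hl2 := Phi0_lip w (w + eps) ltac:(lra)).
  assert (Hm1 := Phi0_mono (w - eps) w ltac:(lra)).
  assert (Hm2 := Phi0_mono w (w + eps) ltac:(lra)).
  apply Rabs_le_between. split; lra.
Qed.

Lemma finite_grid (P : nat -> nat -> Prop) J :
  (forall j, (j <= J)%nat -> exists N, forall n, (N <= n)%nat -> P j n) ->
  exists N, forall n, (N <= n)%nat -> forall j, (j <= J)%nat -> P j n.
Proof.
  induction J as [|J IH]; intros H.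
  - destruct (H 0%nat ltac:(lia)) as [N HN]. exists N. intros n Hn j Hj.
    assert (j = 0%nat) by lia. subst. auto.
  - destruct IH as [N1 HN1]. { intros. apply H. lia. }
    destruct (H (S J) ltac:(lia)) as [N2 HN2].
    exists (Nat.max N1 N2). intros n Hn j Hj.
    destruct (Nat.eq_dec j (S J)). subst. apply HN2. lia. apply HN1. lia. lia.
Qed.

Theorem theorem4 (p : nat -> R)
  (hp : forall n, 0 < p n < 1)
  (hgrowth : is_lim_seq
     (fun n => Rpower (INR n) (1/9) * p n * Rpower (1 - p n) (1/3)) p_infty) :
  forall eps, 0 < eps ->
    exists N : nat, forall n, (N <= n)%nat ->
      forall w : R, Rabs (prob_std_le n (p n) w - Phi w) <= eps.
Proof.
  intros eps He.
  set (K := 2 / eps + 2).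
  assert (H2e : 0 < 2 / eps) by (apply Rdiv_lt_0_compat; lra).
  assert (HK : 2 <= K) by (unfold K; lra).
  assert (HPK : Phi0 (-K) <= eps / 2).
  { assert (H := Phi0_left (-K) ltac:(lra)). replace ((-K)^2) with (K^2) in H by ring.
    assert (H1 := exp_neg_le (K^2/2) ltac:(nra)). replace (- (K^2/2)) with (- K^2/2) in H1 by field.
    assert (1 / (1 + K^2/2) <= eps / 2).
    { apply (Rmult_le_reg_r (1 + K^2/2)). nra.
      replace (1 / (1 + K ^ 2 / 2) * (1 + K ^ 2 / 2)) with 1 by (field; nra).
      assert (K * eps >= 2) by (unfold K; assert (2 / eps * eps = 2) by (field; lra); nra).
      nra. }
    lra. }
  set (y0 := 2 * K / eps).
  assert (Hy0 : 0 <= y0) by (unfold y0; apply Rle_mult_inv_pos; lra).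
  destruct (nfloor_ex y0 Hy0) as [J0 HJ0].
  set (J := S J0).
  set (g := fun j : nat => - K + INR j * eps).
  assert (HgJ : K < g J).
  { unfold g, J. rewrite S_INR. assert (y0 * eps = 2 * K) by (unfold y0; field; lra).
    assert (y0 * eps < (INR J0 + 1) * eps) by (apply Rmult_lt_compat_r; lra). lra. }
  destruct (finite_grid (fun j n => Rabs (prob_std_le n (p n) (g j) - Phi0 (g j)) <= eps / 2) J)
    as [N HN].
  { intros j _. apply (pointwise p hp hgrowth (g j) (eps/2)). lra. }
  exists N. intros n Hn w. rewrite Phi_eq.
  assert (HG := HN n Hn). 
  assert (Hpr := prob_range n (p n) w (hp n)). assert (HPw := Phi0_range w).
  apply Rabs_le_between.
  destruct (Rle_dec w (-K)) as [Hw|Hw].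
  - assert (H0 := HG 0%nat ltac:(lia)). unfold g in H0. simpl INR in H0.
    replace (- K + 0 * eps) with (-K) in H0 by ring. apply Rabs_le_between in H0.
    assert (prob_std_le n (p n) w <= prob_std_le n (p n) (-K)) by (apply prob_mono; auto).
    assert (Phi0 w <= Phi0 (-K)) by (apply Phi0_mono; auto).
    split; lra.
  - destruct (Rle_dec (g J) w) as [Hw2|Hw2].
    + assert (H0 := HG J ltac:(lia)). apply Rabs_le_between in H0.
      assert (prob_std_le n (p n) (g J) <= prob_std_le n (p n) w) by (apply prob_mono; auto).
      assert (Phi0 K <= Phi0 (g J)) by (apply Phi0_mono; lra).
      assert (HK1 := Phi0_sym K).
      assert (Phi0 (g J) <= Phi0 w) by (apply Phi0_mono; auto).
      split; lra.
    + set (y := (w + K) / eps).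
      assert (Hy : 0 <= y) by (unfold y; apply Rle_mult_inv_pos; lra).
      destruct (nfloor_ex y Hy) as [j Hj].
      assert (Hwy : w = g 0%nat + y * eps) by (unfold g, y; simpl; field; lra).
      assert (HjJ : (j < J)%nat).
      { apply INR_lt. assert (y * eps < INR J * eps).
        { apply Rnot_le_lt in Hw2. unfold g in Hw2.
          assert (w + K = y * eps) by (unfold y; field; lra). lra. }
        apply Rmult_lt_reg_r in H; lra. }
      assert (Hgj : g j <= w).
      { unfold g. assert (w + K = y * eps) by (unfold y; field; lra).
        assert (INR j * eps <= y * eps) by (apply Rmult_le_compat_r; lra). lra. }
      assert (Hgj1 : w <= g (S j)).
      { unfold g. assert (w + K = y * eps) by (unfold y; field; lra). rewrite S_INR.
        assert (y * eps <= (INR j + 1) * eps) by (apply Rmult_le_compat_r; lra). lra. }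
      assert (Hstep : g (S j) - g j = eps) by (unfold g; rewrite S_INR; ring).
      assert (H0 := HG j ltac:(lia)). assert (H1 := HG (S j) ltac:(lia)).
      apply Rabs_le_between in H0. apply Rabs_le_between in H1.
      assert (prob_std_le n (p n) (g j) <= prob_std_le n (p n) w) by (apply prob_mono; auto).
      assert (prob_std_le n (p n) w <= prob_std_le n (p n) (g (S j))) by (apply prob_mono; auto).
      assert (L1 := Phi0_lip (g j) w Hgj). assert (L2 := Phi0_lip w (g (S j)) Hgj1).
      split; lra.
Qed.
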